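(* Let $\epsilon>0$, $\mathbf C\in\mathbb R^{n\times n}$, $\mathbf b_1,\dots,\mathbf b_N\in\Sigma_n$, weights $\lambda\in\Sigma_N$ with $\lambda_k>0$ for all $k$, $A:\mathbb R^n\to\mathbb R^p$ linear with adjoint $A^*$, and $J:\mathbb R^p\to\mathbb R$ convex (finite-valued) with convex conjugate $J^*$. Consider the primal problem $$(\mathcal P)\qquad \min_{\mathbf a\in\Sigma_n}\sum_{k=1}^N\lambda_kF_{\mathbf b_k}(\mathbf a)+J(A\mathbf a)$$ and the dual problem $$(\mathcal D)\qquad \inf_{\mathbf f_1,\dots,\mathbf f_N\in\mathbb R^n,\ \mathbf g\in\mathbb R^p}\sum_{k=1}^N\lambda_kF^*_{\mathbf b_k}(\mathbf f_k)+J^*(\mathbf g)\quad\text{s.t.}\quad A^*\mathbf g+\sum_{k=1}^N\lambda_k\mathbf f_k=0.$$ Then $\min(\mathcal P)=-\inf(\mathcal D)$, and if $((\mathbf f_k)_{k=1}^N,\mathbf g)$ is a minimizer of $(\mathcal D)$, then the vectors $\nabla F^*_{\mathbf b_k}(\mathbf f_k)$, $k=1,\dots,N$, are all equal to a common vector $\mathbf a$, and this $\mathbf a$ is a solution of $(\mathcal P)$.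
   Context: $\Sigma_n=\{\mathbf a\in\mathbb R^n_+:\sum_i\mathbf a_i=1\}$; $U(\mathbf a,\mathbf b)=\{\mathbf P\in\mathbb R_+^{n\times n}:\mathbf P\mathbf 1_n=\mathbf a,\ \mathbf P^\top\mathbf 1_n=\mathbf b\}$; $\mathbf H(\mathbf P)=-\sum_{i,j}\mathbf P_{i,j}(\log\mathbf P_{i,j}-1)$ with $0\log0=0$; $W^\epsilon_{\mathbf C}(\mathbf a,\mathbf b)=\min_{\mathbf P\in U(\mathbf a,\mathbf b)}\sum_{i,j}\mathbf P_{i,j}\mathbf C_{i,j}-\epsilon\mathbf H(\mathbf P)$. For $\mathbf b\in\Sigma_n$, $F_{\mathbf b}(\mathbf a)=W^\epsilon_{\mathbf C}(\mathbf a,\mathbf b)$ for $\mathbf a\in\Sigma_n$, and $F^*_{\mathbf b}(\mathbf f)=\max_{\mathbf a\in\Sigma_n}\langle\mathbf f,\mathbf a\rangle-F_{\mathbf b}(\mathbf a)$ for $\mathbf f\in\mathbb R^n$ (a differentiable function on $\mathbb R^n$). $J^*(\mathbf g)=\sup_{\mathbf y\in\mathbb R^p}\langle\mathbf g,\mathbf y\rangle-J(\mathbf y)$. *)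

(* Defs.v *)
From Stdlib Require Import Reals ClassicalEpsilon.
From mathcomp Require Import all_boot.

Set Implicit Arguments.
Unset Strict Implicit.
Unset Printing Implicit Defensive.

Local Open Scope R_scope.

Inductive ERbar : Type := Fin (r : R) | PInf | MInf.

Definition ER_opp (x : ERbar) : ERbar :=
  match x with Fin r => Fin (- r) | PInf => MInf | MInf => PInf end.

Definition ER_le (x y : ERbar) : Prop :=
  match x, y with
  | MInf, _ => True
  | _, PInf => True
  | Fin a, Fin b => a <= b
  | _, _ => False
  end.

Definition ER_plusR (r : R) (x : ERbar) : ERbar :=
  match x with Fin s => Fin (r + s) | PInf => PInf | MInf => MInf end.

Definition ER_sup (E : R -> Prop) : ERbar :=
  match excluded_middle_informative (exists x, E x) with
  | right _ => MInf
  | left ne =>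
      match excluded_middle_informative (bound E) with
      | right _ => PInf
      | left hb => Fin (proj1_sig (completeness E hb ne))
      end
  end.

Definition ER_inf (E : R -> Prop) : ERbar :=
  ER_opp (ER_sup (fun x => E (- x))).

Definition ER_real (x : ERbar) : R := match x with Fin r => r | _ => 0 end.

Definition vec (n : nat) := 'I_n -> R.

Definition vsum (n : nat) (f : 'I_n -> R) : R := \big[Rplus/0]_(i < n) f i.

Definition dot (n : nat) (x y : vec n) : R := vsum (fun i => x i * y i).

Definition vadd (n : nat) (x y : vec n) : vec n := fun i => x i + y i.

Definition vnorm (n : nat) (x : vec n) : R := sqrt (dot x x).

Definition simplex (n : nat) (a : vec n) : Prop :=
  (forall i, 0 <= a i) /\ vsum a = 1.

Definition coupling (n : nat) (a b : vec n) (P : 'I_n -> 'I_n -> R) : Prop :=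
  (forall i j, 0 <= P i j) /\
  (forall i, vsum (fun j => P i j) = a i) /\
  (forall j, vsum (fun i => P i j) = b j).

(* x log x with the convention 0 log 0 = 0 (only used for x >= 0) *)
Definition xlnx (x : R) : R := if Rle_dec x 0 then 0 else x * ln x.

Definition entropy (n : nat) (P : 'I_n -> 'I_n -> R) : R :=
  - vsum (fun i => vsum (fun j => xlnx (P i j) - P i j)).

Definition ot_cost (n : nat) (eps : R) (C P : 'I_n -> 'I_n -> R) : R :=
  vsum (fun i => vsum (fun j => P i j * C i j)) - eps * entropy P.

Definition Weps (n : nat) (eps : R) (C : 'I_n -> 'I_n -> R) (a b : vec n) : R :=
  ER_real (ER_inf (fun w => exists P, coupling a b P /\ w = ot_cost eps C P)).

Definition Fb (n : nat) (eps : R) (C : 'I_n -> 'I_n -> R) (b : vec n) (a : vec n) : R :=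
  Weps eps C a b.

Definition Fb_star (n : nat) (eps : R) (C : 'I_n -> 'I_n -> R) (b : vec n) (f : vec n) : R :=
  ER_real (ER_sup (fun v => exists a, simplex a /\ v = dot f a - Fb eps C b a)).

Definition conj_star (p : nat) (J : vec p -> R) (g : vec p) : ERbar :=
  ER_sup (fun v => exists y, v = dot g y - J y).

Definition is_gradient (n : nat) (F : vec n -> R) (x v : vec n) : Prop :=
  forall e, 0 < e -> exists d, 0 < d /\
    forall h : vec n, vnorm h < d ->
      Rabs (F (vadd x h) - F x - dot v h) <= e * vnorm h.

Definition convex_fun (p : nat) (J : vec p -> R) : Prop :=
  forall (x y : vec p) (t : R), 0 <= t <= 1 ->
    J (fun i => t * x i + (1 - t) * y i) <= t * J x + (1 - t) * J y.

Definition linear_map (n p : nat) (A : vec n -> vec p) : Prop :=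
  (forall x y, A (vadd x y) = vadd (A x) (A y)) /\
  (forall (c : R) x, A (fun i => c * x i) = (fun j => c * A x j)).

Definition is_adjoint (n p : nat) (A : vec n -> vec p) (Astar : vec p -> vec n) : Prop :=
  forall x y, dot (A x) y = dot x (Astar y).

Definition primal_obj (n N p : nat) (eps : R) (C : 'I_n -> 'I_n -> R)
  (b : 'I_N -> vec n) (lam : vec N) (A : vec n -> vec p) (J : vec p -> R)
  (a : vec n) : R :=
  vsum (fun k => lam k * Fb eps C (b k) a) + J (A a).

Definition dual_feasible (n N p : nat) (lam : vec N) (Astar : vec p -> vec n)
  (f : 'I_N -> vec n) (g : vec p) : Prop :=
  forall i, Astar g i + vsum (fun k => lam k * f k i) = 0.

Definition dual_obj (n N p : nat) (eps : R) (C : 'I_n -> 'I_n -> R)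
  (b : 'I_N -> vec n) (lam : vec N) (J : vec p -> R)
  (f : 'I_N -> vec n) (g : vec p) : ERbar :=
  ER_plusR (vsum (fun k => lam k * Fb_star eps C (b k) (f k))) (conj_star J g).

(* inf(D): infimum of the dual objective over the feasible set
   (points where J*(g) = +oo do not lower the infimum) *)
Definition dual_inf (n N p : nat) (eps : R) (C : 'I_n -> 'I_n -> R)
  (b : 'I_N -> vec n) (lam : vec N) (Astar : vec p -> vec n) (J : vec p -> R) : ERbar :=
  ER_inf (fun v => exists f g, dual_feasible lam Astar f g /\
                               dual_obj eps C b lam J f g = Fin v).

Definition dual_minimizer (n N p : nat) (eps : R) (C : 'I_n -> 'I_n -> R)
  (b : 'I_N -> vec n) (lam : vec N) (Astar : vec p -> vec n) (J : vec p -> R)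
  (f : 'I_N -> vec n) (g : vec p) : Prop :=
  dual_feasible lam Astar f g /\
  forall f' g', dual_feasible lam Astar f' g' ->
    ER_le (dual_obj eps C b lam J f g) (dual_obj eps C b lam J f' g').

(* Main.v *)
Require Import Defs.
From Stdlib Require Import Reals Lra Classical ClassicalEpsilon FunctionalExtensionality.
From HB Require Import structures.
From mathcomp Require Import all_boot.
Set Implicit Arguments.
Unset Strict Implicit.
Unset Printing Implicit Defensive.
Local Open Scope R_scope.

HB.instance Definition Rplus_comlaw :=
  Monoid.isComLaw.Build R 0 Rplus (fun a b c => esym (Rplus_assoc a b c)) Rplus_comm Rplus_0_l.

Section VS.
Variable n : nat.
Implicit Types f g : 'I_n -> R.

Lemma vsum_ext f g : (forall i, f i = g i) -> vsum f = vsum g.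
Proof. move=> H; rewrite /vsum; apply: eq_bigr => i _; exact: H. Qed.

Lemma vsum_add f g : vsum (fun i => f i + g i) = vsum f + vsum g.
Proof. rewrite /vsum big_split //. Qed.

Lemma vsum_scal (c : R) f : vsum (fun i => c * f i) = c * vsum f.
Proof.
rewrite /vsum; elim/big_rec2: _ => [|i y1 y2 _ ->]; first by rewrite Rmult_0_r.
by rewrite Rmult_plus_distr_l.
Qed.

Lemma vsum_scalr (c : R) f : vsum (fun i => f i * c) = vsum f * c.
Proof. rewrite Rmult_comm -vsum_scal; apply: vsum_ext => i; ring. Qed.

Lemma vsum_opp f : vsum (fun i => - f i) = - vsum f.
Proof. rewrite -(vsum_ext (f := fun i => -1 * f i)) ?vsum_scal; [ring| move=> i; ring]. Qed.

Lemma vsum_sub f g : vsum (fun i => f i - g i) = vsum f - vsum g.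
Proof.
rewrite (vsum_ext (g := fun i => f i + - g i)) ?vsum_add ?vsum_opp //.
Qed.

Lemma vsum_le f g : (forall i, f i <= g i) -> vsum f <= vsum g.
Proof.
move=> H; rewrite /vsum; elim/big_rec2: _ => [|i y1 y2 _ Hy]; first lra.
by apply: Rplus_le_compat.
Qed.

Lemma vsum_lt f g : (forall i, f i <= g i) -> (exists i, f i < g i) -> vsum f < vsum g.
Proof.
move=> H [k Hk]; rewrite /vsum (bigD1 k) //= [X in _ < X](bigD1 k) //=.
apply: Rplus_lt_le_compat => //; elim/big_rec2: _ => [|i y1 y2 _ Hy]; first lra.
by apply: Rplus_le_compat.
Qed.

Lemma vsum0 : vsum (fun _ : 'I_n => 0) = 0.
Proof. rewrite /vsum; elim/big_rec: _ => //= i x _ ->; lra. Qed.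

Lemma vsum_const c : vsum (fun _ : 'I_n => c) = INR n * c.
Proof.
rewrite /vsum big_const_ord; elim: n => [|m IH] /=; first ring.
rewrite IH; case: m {IH} => /= [|m]; ring.
Qed.

Lemma vsum_ge0 f : (forall i, 0 <= f i) -> 0 <= vsum f.
Proof. move=> H; rewrite -vsum0; exact: vsum_le. Qed.

Lemma vsum_single f (k : 'I_n) : (forall i, i != k -> f i = 0) -> vsum f = f k.
Proof.
move=> H; rewrite /vsum (bigD1 k) //= big1 ?Rplus_0_r // => i Hi; exact: H.
Qed.

Lemma vsum_le_term f (k : 'I_n) : (forall i, 0 <= f i) -> f k <= vsum f.
Proof.
move=> H; rewrite /vsum (bigD1 k) //=.
apply: Rle_trans (_ : f k + 0 <= _); first lra.
apply: Rplus_le_compat_l.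
elim/big_rec: _ => [|i x _ Hx]; [lra|]; move: (H i); lra.
Qed.

Lemma vsum_abs f : Rabs (vsum f) <= vsum (fun i => Rabs (f i)).
Proof.
rewrite /vsum; elim/big_rec2: _ => [|i y1 y2 _ Hy]; first by rewrite Rabs_R0; lra.
apply: Rle_trans (Rabs_triang _ _) _; lra.
Qed.

Lemma vsum_eq0_nonneg f : (forall i, 0 <= f i) -> vsum f = 0 -> forall i, f i = 0.
Proof.
move=> H0 H i; have := vsum_le_term i H0; have := H0 i; lra.
Qed.

Lemma vsum_exists_pos f : (forall i, 0 <= f i) -> 0 < vsum f -> exists i, 0 < f i.
Proof.
move=> H0 H; apply: NNPP => Hn.
have : vsum f <= 0.
  rewrite -vsum0; apply: vsum_le => i; apply: Rnot_lt_le => Hi; apply: Hn; by exists i.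
lra.
Qed.

End VS.

Lemma vsum_swap n m (f : 'I_n -> 'I_m -> R) :
  vsum (fun i => vsum (f i)) = vsum (fun j => vsum (fun i => f i j)).
Proof. rewrite /vsum. exact: exchange_big. Qed.

Definition vsub n (x y : vec n) : vec n := fun i => x i - y i.
Definition vscal n (c : R) (x : vec n) : vec n := fun i => c * x i.
Definition vzero n : vec n := fun _ => 0.
Definition ev n (k : 'I_n) : vec n := fun i => if i == k then 1 else 0.

Lemma dot_sym n (x y : vec n) : dot x y = dot y x.
Proof. apply: vsum_ext => i; ring. Qed.
Lemma dot_addl n (x y z : vec n) : dot (vadd x y) z = dot x z + dot y z.
Proof. rewrite /dot -vsum_add; apply: vsum_ext => i; rewrite /vadd; ring. Qed.
Lemma dot_addr n (x y z : vec n) : dot z (vadd x y) = dot z x + dot z y.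
Proof. rewrite /dot -vsum_add; apply: vsum_ext => i; rewrite /vadd; ring. Qed.
Lemma dot_subl n (x y z : vec n) : dot (vsub x y) z = dot x z - dot y z.
Proof. rewrite /dot -vsum_sub; apply: vsum_ext => i; rewrite /vsub; ring. Qed.
Lemma dot_subr n (x y z : vec n) : dot z (vsub x y) = dot z x - dot z y.
Proof. rewrite /dot -vsum_sub; apply: vsum_ext => i; rewrite /vsub; ring. Qed.
Lemma dot_scall n c (x y : vec n) : dot (vscal c x) y = c * dot x y.
Proof. rewrite /dot -vsum_scal; apply: vsum_ext => i; rewrite /vscal; ring. Qed.
Lemma dot_scalr n c (x y : vec n) : dot x (vscal c y) = c * dot x y.
Proof. rewrite /dot -vsum_scal; apply: vsum_ext => i; rewrite /vscal; ring. Qed.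
Lemma dot_zerol n (x : vec n) : dot (@vzero n) x = 0.
Proof. rewrite /dot -(@vsum0 n); apply: vsum_ext => i; rewrite /vzero; ring. Qed.
Lemma dot_zeror n (x : vec n) : dot x (@vzero n) = 0.
Proof. rewrite /dot -(@vsum0 n); apply: vsum_ext => i; rewrite /vzero; ring. Qed.
Lemma dot_ev n (k : 'I_n) (x : vec n) : dot x (ev k) = x k.
Proof.
rewrite /dot (vsum_single (k := k)) /ev ?eqxx ?Rmult_1_r // => i /negbTE ->; ring.
Qed.
Lemma dot_ext n (x x' y y' : vec n) : (forall i, x i = x' i) -> (forall i, y i = y' i) ->
  dot x y = dot x' y'.
Proof. move=> H1 H2; apply: vsum_ext => i; by rewrite H1 H2. Qed.
Lemma dot_ge0 n (x : vec n) : 0 <= dot x x.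
Proof. apply: vsum_ge0 => i; apply: Rle_0_sqr. Qed.

Lemma vec_ext_dot n (x y : vec n) : (forall z : vec n, dot x z = dot y z) -> forall i, x i = y i.
Proof. move=> H i; by rewrite -!(dot_ev i) H. Qed.


Lemma ER_sup_fin (E : R -> Prop) : (exists x, E x) -> (exists M, forall x, E x -> x <= M) ->
  exists s, ER_sup E = Fin s /\ (forall x, E x -> x <= s) /\
            (forall M, (forall x, E x -> x <= M) -> s <= M).
Proof.
move=> ne hb; have hb' : bound E by case: hb => M HM; exists M.
rewrite /ER_sup; case: excluded_middle_informative => [ne'|//].
case: excluded_middle_informative => [hb''|//].
case: (completeness E hb'' ne') => s [H1 H2] /=; exists s; split; first done.
split; [exact: H1 | exact: H2].
Qed.

Lemma ER_sup_unbounded (E : R -> Prop) : (forall M, exists x, E x /\ M < x) -> ER_sup E = PInf.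
Proof.
move=> H; rewrite /ER_sup; case: excluded_middle_informative => [ne|[]]; last first.
  by case: (H 0) => x [Ex _]; exists x.
case: excluded_middle_informative => [[M HM]|//].
case: (H M) => x [Ex Hx]; have := HM x Ex; lra.
Qed.

Lemma ER_sup_nonMInf (E : R -> Prop) : (exists x, E x) -> ER_sup E <> MInf.
Proof.
move=> ne; rewrite /ER_sup; case: excluded_middle_informative => [ne'|//].
by case: excluded_middle_informative.
Qed.

Lemma ER_sup_Fin_ub (E : R -> Prop) s : ER_sup E = Fin s -> forall x, E x -> x <= s.
Proof.
rewrite /ER_sup; case: excluded_middle_informative => [ne|//].
case: excluded_middle_informative => [hb|//].
case: (completeness E hb ne) => s' [H1 H2] /= [<-] x Ex; exact: H1.
Qed.

Lemma ER_sup_Fin_lub (E : R -> Prop) s : ER_sup E = Fin s ->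
  forall M, (forall x, E x -> x <= M) -> s <= M.
Proof.
rewrite /ER_sup; case: excluded_middle_informative => [ne|//].
case: excluded_middle_informative => [hb|//].
case: (completeness E hb ne) => s' [H1 H2] /= [<-] M HM; exact: H2.
Qed.

Lemma ER_sup_Fin_approx (E : R -> Prop) s : ER_sup E = Fin s ->
  forall e, 0 < e -> exists x, E x /\ s - e < x.
Proof.
move=> Hs e He; apply: NNPP => Hn.
have := ER_sup_Fin_lub Hs (M := s - e).
have : forall x, E x -> x <= s - e.
  move=> x Ex; apply: Rnot_lt_le => Hx; apply: Hn; by exists x.
move=> H1 H2; have := H2 H1; lra.
Qed.

Lemma ER_sup_attained (E : R -> Prop) s : E s -> (forall x, E x -> x <= s) -> ER_sup E = Fin s.
Proof.
move=> Es Hs; case: (@ER_sup_fin E) => [|| s' [-> [H1 H2]]].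
- by exists s.
- by exists s.
- have := H1 _ Es; have := H2 _ Hs; move=> *; f_equal; lra.
Qed.

Lemma ER_inf_fin (E : R -> Prop) : (exists x, E x) -> (exists m, forall x, E x -> m <= x) ->
  exists s, ER_inf E = Fin s /\ (forall x, E x -> s <= x) /\
            (forall m, (forall x, E x -> m <= x) -> m <= s).
Proof.
move=> [x0 Ex0] [m Hm].
case: (@ER_sup_fin (fun x => E (- x))).
- exists (- x0); by rewrite Ropp_involutive.
- exists (- m) => x Ex; have := Hm _ Ex; lra.
- move=> s [Hs [H1 H2]]; exists (- s); rewrite /ER_inf Hs /=; split => //; split.
  + move=> x Ex; have : E (- - x) by rewrite Ropp_involutive.
    move/H1; lra.
  + move=> m' Hm'; have : forall x, E (- x) -> x <= - m'.
      move=> x /Hm'; lra.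
    move/H2; lra.
Qed.

Lemma ER_inf_attained (E : R -> Prop) s : E s -> (forall x, E x -> s <= x) -> ER_inf E = Fin s.
Proof.
move=> Es Hs; case: (@ER_inf_fin E) => [|| s' [-> [H1 H2]]].
- by exists s.
- by exists s.
- have := H1 _ Es; have := H2 _ Hs; move=> *; f_equal; lra.
Qed.

Lemma ER_inf_Fin_approx (E : R -> Prop) s : ER_inf E = Fin s ->
  forall e, 0 < e -> exists x, E x /\ x < s + e.
Proof.
rewrite /ER_inf; case H: (ER_sup _) => [s'| |] //= [<-] e He.
case: (ER_sup_Fin_approx H He) => x [Ex Hx]; exists (- x); split => //; lra.
Qed.

Lemma ER_inf_Fin_lb (E : R -> Prop) s : ER_inf E = Fin s -> forall x, E x -> s <= x.
Proof.
rewrite /ER_inf; case H: (ER_sup _) => [s'| |] //= [<-] x Ex.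
have : E (- - x) by rewrite Ropp_involutive.
move/(ER_sup_Fin_ub H); lra.
Qed.

Section HB.
Variable m : nat.
Variable q : vec m -> R.
Hypothesis qadd : forall x y, q (vadd x y) <= q x + q y.
Hypothesis qhom : forall c x, 0 < c -> q (vscal c x) = c * q x.

Lemma q0 : q (@vzero m) = 0.
Proof.
have H := qhom (@vzero m) (ltac:(lra) : 0 < 2).
have E : vscal 2 (@vzero m) = @vzero m by apply: functional_extensionality => i; rewrite /vscal /vzero; ring.
rewrite E in H; lra.
Qed.

Definition supp (k : nat) (x : vec m) := forall i : 'I_m, (k <= i)%N -> x i = 0.

Lemma hb_step k : (k < m)%N -> forall c : vec m, (forall x, supp k x -> dot c x <= q x) ->
  exists c' : vec m, forall x, supp k.+1 x -> dot c' x <= q x.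
Proof.
move=> km c Hc; set kk : 'I_m := Ordinal km; set e := ev kk.
set S := fun v => exists y, supp k y /\ v = dot c y - q (vsub y e).
have suppsc : forall a y, supp k y -> supp k (vscal a y).
  by move=> a y Hy i Hi; rewrite /vscal Hy //; ring.
have Sub : forall y z, supp k y -> supp k z -> dot c y - q (vsub y e) <= q (vadd z e) - dot c z.
  move=> y z Hy Hz.
  have Hyz : supp k (vadd y z) by move=> i Hi; rewrite /vadd Hy ?Hz //; ring.
  have := Hc _ Hyz; rewrite dot_addr.
  have -> : vadd y z = vadd (vsub y e) (vadd z e).
    by apply: functional_extensionality => i; rewrite /vadd /vsub; ring.
  have := qadd (vsub y e) (vadd z e); lra.
case: (@ER_sup_fin S).
- exists (dot c (@vzero m) - q (vsub (@vzero m) e)); exists (@vzero m); split => //.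
- exists (q (vadd (@vzero m) e) - dot c (@vzero m)) => v [y [Hy ->]]; apply: Sub => //.
- move=> s [_ [Hub Hlub]].
  exists (fun i => if i == kk then s else c i) => x Hx.
  set t := x kk; set y := fun i => if i == kk then 0 else x i.
  have Hy : supp k y.
    move=> i Hi; rewrite /y; case: eqP => // /eqP Hne; apply: Hx.
    rewrite ltn_neqAle Hi andbT; apply/eqP => Heq; move/eqP: Hne; apply.
    by apply: val_inj.
  have Ex : x = vadd y (vscal t e).
    apply: functional_extensionality => i; rewrite /vadd /vscal /y /e /ev /t.
    case: eqP => [->|_]; ring.
  have Hdot : dot (fun i => if i == kk then s else c i) x = dot c y + t * s.
    rewrite Ex dot_addr dot_scalr dot_ev eqxx; congr (_ + _).
    apply: vsum_ext => i; rewrite /y; case: eqP => _; ring.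
  rewrite Hdot.
  case: (Rtotal_order t 0) => [Ht|[Ht|Ht]].
  +
    set r := - t.
    have Hr : 0 < r by rewrite /r; lra.
    have Hel : S (dot c (vscal (/ r) y) - q (vsub (vscal (/ r) y) e)).
      by exists (vscal (/ r) y); split => //; apply: suppsc.
    have := Hub _ Hel; rewrite dot_scalr => H1.
    have Eq : vsub (vscal (/ r) y) e = vscal (/ r) x.
      rewrite Ex; apply: functional_extensionality => i; rewrite /vsub /vscal /vadd /r.
      field; lra.
    rewrite Eq qhom in H1; last by apply: Rinv_0_lt_compat.
    have H2 : r * (/ r * dot c y - / r * q x) <= r * s by apply: Rmult_le_compat_l; lra.
    have : r * (/ r * dot c y - / r * q x) = dot c y - q x by field; lra.
    rewrite /r in H2 * => E2; lra.
  + rewrite Ht Rmult_0_l Rplus_0_r.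
    have -> : x = y by rewrite Ex Ht; apply: functional_extensionality => i; rewrite /vadd /vscal; ring.
    exact: Hc.
  + have Hy' : supp k (vscal (/ t) y) by apply: suppsc.
    have Hs : s <= q (vadd (vscal (/ t) y) e) - dot c (vscal (/ t) y).
      by apply: Hlub => v [z [Hz ->]]; apply: Sub.
    have Eq : vadd (vscal (/ t) y) e = vscal (/ t) x.
      rewrite Ex; apply: functional_extensionality => i; rewrite /vsub /vscal /vadd.
      field; lra.
    rewrite Eq qhom ?dot_scalr in Hs; last by apply: Rinv_0_lt_compat.
    have H2 : t * s <= t * (/ t * q x - / t * dot c y) by apply: Rmult_le_compat_l; lra.
    have : t * (/ t * q x - / t * dot c y) = q x - dot c y by field; lra.
    lra.
Qed.

Lemma hahn_banach : exists c : vec m, forall x, dot c x <= q x.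
Proof.
have H : forall k, (k <= m)%N -> exists c : vec m, forall x, supp k x -> dot c x <= q x.
  elim => [_|k IH km].
  - exists (@vzero m) => x Hx.
    have -> : x = @vzero m by apply: functional_extensionality => i; apply: Hx.
    rewrite dot_zeror q0; lra.
  - case: (IH (ltnW km)) => c Hc; exact: (hb_step km Hc).
case: (H m (leqnn m)) => c Hc; exists c => x; apply: Hc => i Hi.
by move: (ltn_ord i); rewrite ltnNge Hi.
Qed.
End HB.


Section Subgrad.
Variable m : nat.
Variable J : vec m -> R.
Hypothesis Jc : convex_fun J.
Variable x : vec m.

Lemma cvx z u v t : 0 <= t <= 1 -> (forall i, z i = t * u i + (1 - t) * v i) ->
  J z <= t * J u + (1 - t) * J v.
Proof.
move=> Ht Hz; have -> : z = (fun i => t * u i + (1 - t) * v i) by apply: functional_extensionality.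
exact: Jc.
Qed.

Definition pt (h : vec m) (t : R) : vec m := fun i => x i + t * h i.
Definition D (h : vec m) (t : R) := (J (pt h t) - J x) / t.

Lemma D_lb h t : 0 < t -> J x - J (pt h (-1)) <= D h t.
Proof.
move=> Ht; rewrite /D.
have H := @cvx x (pt h t) (pt h (-1)) (/ (1 + t)).
have H1 : 0 <= / (1 + t) <= 1.
  split; first by apply: Rlt_le; apply: Rinv_0_lt_compat; lra.
  rewrite -Rinv_1; apply: Rinv_le_contravar; lra.
have := H H1; clear H => H.
have : J x <= / (1 + t) * J (pt h t) + (1 - / (1 + t)) * J (pt h (-1)).
  apply: H => i; rewrite /pt; field; lra.
move=> {H} H.
have H2 : (1 + t) * J x <= J (pt h t) + t * J (pt h (-1)).
  have := Rmult_le_compat_l (1 + t) _ _ ltac:(lra) H.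
  have -> : (1 + t) * (/ (1 + t) * J (pt h t) + (1 - / (1 + t)) * J (pt h (-1)))
          = J (pt h t) + t * J (pt h (-1)) by field; lra.
  done.
apply: (Rmult_le_reg_l t); first done.
have -> : t * ((J (pt h t) - J x) / t) = J (pt h t) - J x by field; lra.
lra.
Qed.

Lemma D_mono h s t : 0 < s -> s <= t -> D h s <= D h t.
Proof.
move=> Hs Hst; rewrite /D.
have H : J (pt h s) <= (s / t) * J (pt h t) + (1 - s / t) * J x.
  apply: cvx.
  - split; first by apply: Rlt_le; apply: Rdiv_lt_0_compat; lra.
    apply: (Rmult_le_reg_l t); first lra.
    have -> : t * (s / t) = s by field; lra.
    lra.
  - move=> i; rewrite /pt; field; lra.
have H2 : J (pt h s) - J x <= (s / t) * (J (pt h t) - J x) by lra.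
apply: (Rmult_le_reg_l s); first done.
have -> : s * ((J (pt h s) - J x) / s) = J (pt h s) - J x by field; lra.
have -> : s * ((J (pt h t) - J x) / t) = (s / t) * (J (pt h t) - J x) by field; lra.
done.
Qed.

Definition DSq h := fun v => exists t, 0 < t /\ v = D h t.
Definition qq (h : vec m) : R := ER_real (ER_inf (DSq h)).

Lemma qq_fin h : ER_inf (DSq h) = Fin (qq h).
Proof.
case: (@ER_inf_fin (DSq h)).
- by exists (D h 1); exists 1; split => //; lra.
- exists (J x - J (pt h (-1))) => v [t [Ht ->]]; exact: D_lb.
- by move=> s [E _]; rewrite /qq E.
Qed.

Lemma qq_le h t : 0 < t -> qq h <= D h t.
Proof. move=> Ht; apply: (ER_inf_Fin_lb (qq_fin h)); by exists t. Qed.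

Lemma qq_glb h M : (forall t, 0 < t -> M <= D h t) -> M <= qq h.
Proof.
move=> H; apply: Rnot_lt_le => Hlt.
case: (ER_inf_Fin_approx (qq_fin h) (e := M - qq h) ltac:(lra)) => v [[t [Ht ->]] Hv].
have := H t Ht; lra.
Qed.

Lemma qq_hom c h : 0 < c -> qq (vscal c h) = c * qq h.
Proof.
move=> Hc; apply: Rle_antisym.
-
  have : qq (vscal c h) / c <= qq h.
    apply: qq_glb => t Ht.
    have := qq_le (vscal c h) (t := t / c) ltac:(apply: Rdiv_lt_0_compat; lra).
    have -> : D (vscal c h) (t / c) = c * D h t.
      rewrite /D; have -> : pt (vscal c h) (t / c) = pt h t.
        by apply: functional_extensionality => i; rewrite /pt /vscal; field; lra.
      field; lra.
    move=> H; apply: (Rmult_le_reg_l c); first lra.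
    have -> : c * (qq (vscal c h) / c) = qq (vscal c h) by field; lra.
    done.
  move=> H; have := Rmult_le_compat_l c _ _ ltac:(lra) H.
  have -> : c * (qq (vscal c h) / c) = qq (vscal c h) by field; lra.
  done.
- apply: qq_glb => t Ht.
  have := qq_le h (t := t * c) ltac:(apply: Rmult_lt_0_compat; lra).
  have -> : D (vscal c h) t = c * D h (t * c).
    rewrite /D; have -> : pt (vscal c h) t = pt h (t * c).
      by apply: functional_extensionality => i; rewrite /pt /vscal; ring.
    field; lra.
  move=> H; apply: Rmult_le_compat_l => //; lra.
Qed.

Lemma qq_add h1 h2 : qq (vadd h1 h2) <= qq h1 + qq h2.
Proof.
have key : forall t1 t2, 0 < t1 -> 0 < t2 -> qq (vadd h1 h2) <= D h1 t1 + D h2 t2.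
  move=> t1 t2 H1 H2; set t := Rmin t1 t2.
  have Ht : 0 < t by rewrite /t; apply: Rmin_pos.
  have E1 : D h1 t <= D h1 t1 by apply: D_mono => //; apply: Rmin_l.
  have E2 : D h2 t <= D h2 t2 by apply: D_mono => //; apply: Rmin_r.
  have Hq := qq_le (vadd h1 h2) (t := t / 2) ltac:(lra).
  have Hj : J (pt (vadd h1 h2) (t / 2)) <= / 2 * J (pt h1 t) + (1 - / 2) * J (pt h2 t).
    apply: cvx; first lra.
    move=> i; rewrite /pt /vadd; field.
  have : D (vadd h1 h2) (t / 2) <= D h1 t + D h2 t.
    rewrite /D; apply: (Rmult_le_reg_l (t / 2)); first lra.
    have -> : t / 2 * ((J (pt (vadd h1 h2) (t / 2)) - J x) / (t / 2))
      = J (pt (vadd h1 h2) (t / 2)) - J x by field; lra.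
    have -> : t / 2 * ((J (pt h1 t) - J x) / t + (J (pt h2 t) - J x) / t)
      = / 2 * (J (pt h1 t) - J x) + / 2 * (J (pt h2 t) - J x) by field; lra.
    lra.
  lra.
have : forall t2, 0 < t2 -> qq (vadd h1 h2) - D h2 t2 <= qq h1.
  move=> t2 H2; apply: qq_glb => t1 H1; have := key t1 t2 H1 H2; lra.
move=> H.
have : qq (vadd h1 h2) - qq h1 <= qq h2.
  apply: qq_glb => t2 H2; have := H t2 H2; lra.
lra.
Qed.

Lemma subgradient_exists : exists g : vec m, forall y, J x + dot g (vsub y x) <= J y.
Proof.
case: (@hahn_banach m qq qq_add qq_hom) => g Hg; exists g => y.
have := Hg (vsub y x); have := qq_le (vsub y x) (t := 1) ltac:(lra).
have -> : D (vsub y x) 1 = J y - J x.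
  rewrite /D; have -> : pt (vsub y x) 1 = y.
    by apply: functional_extensionality => i; rewrite /pt /vsub; ring.
  field.
lra.
Qed.
End Subgrad.


Lemma ln_le_sub1 y : 0 < y -> ln y <= y - 1.
Proof. move=> Hy; have := exp_ineq1_le (ln y); rewrite exp_ln // => H; lra. Qed.

Lemma xlnx_pos x : 0 < x -> xlnx x = x * ln x.
Proof. move=> Hx; rewrite /xlnx; case: Rle_dec => H //; lra. Qed.
Lemma xlnx_nonpos x : x <= 0 -> xlnx x = 0.
Proof. move=> Hx; rewrite /xlnx; case: Rle_dec => H //; lra. Qed.

Lemma xlnx_tangent x z : 0 <= x -> 0 < z -> x * ln z + x - z <= xlnx x.
Proof.
move=> Hx Hz; case: (Req_dec x 0) => [->|Hx0].
  rewrite xlnx_nonpos; lra.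
have Hx' : 0 < x by lra.
rewrite xlnx_pos //.
have := ln_le_sub1 (y := z / x) ltac:(apply: Rdiv_lt_0_compat; lra).
rewrite /Rdiv ln_mult ?ln_Rinv //; last by apply: Rinv_0_lt_compat.
move=> H; have := Rmult_le_compat_l x _ _ (Rlt_le _ _ Hx') H.
have -> : x * (z * / x - 1) = z - x by field; lra.
lra.
Qed.

Lemma xlnx_ge x : 0 <= x -> x - 1 <= xlnx x.
Proof. move=> Hx; have := xlnx_tangent Hx (z := 1) ltac:(lra); rewrite ln_1; lra. Qed.

Lemma xlnx_convex x y t : 0 <= x -> 0 <= y -> 0 <= t <= 1 ->
  xlnx (t * x + (1 - t) * y) <= t * xlnx x + (1 - t) * xlnx y.
Proof.
move=> Hx Hy Ht; set z := t * x + (1 - t) * y.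
have Hz : 0 <= z by rewrite /z; nra.
case: (Req_dec z 0) => [Hz0|Hz0].
  rewrite Hz0 xlnx_nonpos; last lra.
  have H1 : t * x = 0 by rewrite /z in Hz0; nra.
  have H2 : (1 - t) * y = 0 by rewrite /z in Hz0; nra.
  have E1 : t * xlnx x = 0.
    case: (Req_dec t 0) => [->|Ht0]; first ring.
    have -> : x = 0 by nra.
    rewrite xlnx_nonpos; lra.
  have E2 : (1 - t) * xlnx y = 0.
    case: (Req_dec (1 - t) 0) => [->|Ht0]; first ring.
    have -> : y = 0 by nra.
    rewrite xlnx_nonpos; lra.
  lra.
have Hz' : 0 < z by lra.
have T1 := xlnx_tangent Hx Hz'; have T2 := xlnx_tangent Hy Hz'.
rewrite xlnx_pos //.
have -> : z * ln z = t * (x * ln z + x - z) + (1 - t) * (y * ln z + y - z) by rewrite /z; ring.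
apply: Rplus_le_compat; apply: Rmult_le_compat_l; lra.
Qed.

Lemma xlnx_cont_pos x : 0 < x -> continuity_pt xlnx x.
Proof.
move=> Hx; apply: (continuity_pt_locally_ext (fun y => y * ln y) xlnx x x Hx).
- move=> y; rewrite /Rdist => Hy; rewrite xlnx_pos //.
  move: Hy; case: (Rcase_abs (y - x)) => H; [rewrite Rabs_left //| rewrite Rabs_right //]; lra.
- apply: (continuity_pt_mult (fun y => y) ln); first exact: derivable_continuous_pt (derivable_pt_id x).
  apply: derivable_continuous_pt; exists (/ x); exact: derivable_pt_lim_ln.
Qed.

Lemma xlnx_abs_small y : 0 < y < 1 -> Rabs (xlnx y) <= 2 * sqrt y.
Proof.
move=> Hy; rewrite xlnx_pos; last lra.
have Hs : 0 < sqrt y by apply: sqrt_lt_R0; lra.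
have Hln : ln y = 2 * ln (sqrt y).
  have -> : y = sqrt y * sqrt y by rewrite sqrt_sqrt //; lra.
  rewrite ln_mult // sqrt_sqrt; [ring|lra].
have Hl : ln (/ sqrt y) <= / sqrt y - 1 by apply: ln_le_sub1; apply: Rinv_0_lt_compat.
rewrite ln_Rinv // in Hl.
have Hneg : ln y < 0 by rewrite -ln_1; apply: ln_increasing; lra.
rewrite Rabs_left; last by nra.
have Hyy : y = sqrt y * sqrt y by rewrite sqrt_sqrt //; lra.
have : - (y * ln y) = 2 * (sqrt y * sqrt y) * (- ln (sqrt y)) by rewrite {1}Hyy Hln; ring.
move=> ->.
have H1 : - ln (sqrt y) <= / sqrt y by lra.
have H2 : 2 * (sqrt y * sqrt y) * (- ln (sqrt y)) <= 2 * (sqrt y * sqrt y) * / sqrt y.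
  apply: Rmult_le_compat_l => //; nra.
have E : 2 * (sqrt y * sqrt y) * / sqrt y = 2 * sqrt y by field; lra.
by rewrite E in H2.
Qed.

Lemma xlnx_cont0 : continuity_pt xlnx 0.
Proof.
rewrite /continuity_pt /continue_in /limit1_in /limit_in => e He /=.
exists (Rmin 1 (e * e / 16)); split.
  apply: Rmin_pos; nra.
move=> y [_ Hy]; rewrite /R_dist in Hy * ; rewrite (xlnx_nonpos (Rle_refl 0)) Rminus_0_r.
rewrite Rminus_0_r in Hy.
case: (Rle_dec y 0) => Hy0; first by rewrite xlnx_nonpos // Rabs_R0.
have Hy1 : Rabs y < 1 by apply: Rlt_le_trans Hy (Rmin_l _ _).
have Hy2 : Rabs y < e * e / 16 by apply: Rlt_le_trans Hy (Rmin_r _ _).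
rewrite Rabs_right in Hy1 Hy2; try lra.
apply: Rle_lt_trans (xlnx_abs_small _) _; first lra.
have : sqrt y < sqrt (e * e / 16) by apply: sqrt_lt_1; lra.
have -> : e * e / 16 = (e / 4) * (e / 4) by field.
rewrite sqrt_square; lra.
Qed.

Lemma xlnx_cont x : continuity_pt xlnx x.
Proof.
case: (Rtotal_order x 0) => [Hx|[->|Hx]]; last exact: xlnx_cont_pos.
- apply: (continuity_pt_locally_ext (fun _ => 0) xlnx (- x) x); first lra.
  + move=> y; rewrite /Rdist => Hy; rewrite xlnx_nonpos //.
    move: Hy; case: (Rcase_abs (y - x)) => H; [rewrite Rabs_left //| rewrite Rabs_right //]; lra.
  + exact: continuity_pt_const.
- exact: xlnx_cont0.
Qed.

Lemma xlnx_unif e : 0 < e -> exists d, 0 < d /\ forall x y, 0 <= x <= 1 -> 0 <= y <= 1 ->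
  Rabs (x - y) < d -> Rabs (xlnx x - xlnx y) < e.
Proof.
move=> He; have H := @Heine xlnx (fun c => 0 <= c <= 1) (compact_P3 0 1) (fun x _ => xlnx_cont x).
case: (H (mkposreal e He)) => d Hd; exists d; split; first exact: cond_pos d.
move=> x y Hx Hy Hxy; exact: Hd.
Qed.


Section OT.
Variable n : nat.
Variable eps : R.
Variable C : 'I_n -> 'I_n -> R.
Variable b : vec n.
Hypothesis Heps : 0 < eps.
Hypothesis Hb : simplex b.

Definition cost P := ot_cost eps C P.
Definition Costs (a : vec n) := fun w => exists P, coupling a b P /\ w = cost P.
Definition LB := - vsum (fun i => vsum (fun j : 'I_n => Rabs (C i j) + eps)).

Lemma cost_eq P : cost P = vsum (fun i => vsum (fun j => P i j * C i j + eps * (xlnx (P i j) - P i j))).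
Proof.
rewrite /cost /ot_cost /entropy; rewrite -[in RHS](@vsum_ext _ (fun i => vsum (fun j => P i j * C i j) + eps * vsum (fun j => xlnx (P i j) - P i j))).
  by rewrite vsum_add vsum_scal; ring.
by move=> i; rewrite -vsum_scal -vsum_add.
Qed.

Lemma simplex_le1 (a : vec n) i : simplex a -> 0 <= a i <= 1.
Proof. move=> [H0 H1]; split => //; rewrite -H1; exact: vsum_le_term. Qed.

Lemma coup_le1 (a : vec n) P i j : simplex a -> coupling a b P -> 0 <= P i j <= 1.
Proof.
move=> Ha [H0 [Hr Hc]]; split => //.
apply: Rle_trans (_ : a i <= 1); last by case: (simplex_le1 i Ha).
rewrite -Hr; exact: (vsum_le_term j (fun j => H0 i j)).
Qed.

Lemma cost_lb (a : vec n) P : simplex a -> coupling a b P -> LB <= cost P.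
Proof.
move=> Ha HP; rewrite cost_eq /LB -vsum_opp; apply: vsum_le => i.
rewrite -vsum_opp; apply: vsum_le => j.
have [H0 H1] := coup_le1 i j Ha HP.
have := xlnx_ge H0.
have : - Rabs (C i j) <= P i j * C i j.
  case: (Rcase_abs (C i j)) => Hc; [rewrite Rabs_left //| rewrite Rabs_right //]; nra.
nra.
Qed.

Lemma prod_coupling (a : vec n) : simplex a -> coupling a b (fun i j => a i * b j).
Proof.
move=> [Ha0 Ha1]; case: Hb => [Hb0 Hb1]; split; [|split].
- move=> i j; apply: Rmult_le_pos; auto.
- move=> i; rewrite vsum_scal Hb1; ring.
- move=> j; rewrite vsum_scalr Ha1; ring.
Qed.

Definition F (a : vec n) := Fb eps C b a.

Lemma F_fin (a : vec n) : simplex a -> ER_inf (Costs a) = Fin (F a).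
Proof.
move=> Ha; case: (@ER_inf_fin (Costs a)).
- by exists (cost (fun i j => a i * b j)); exists (fun i j => a i * b j); split => //; apply: prod_coupling.
- by exists LB => w [P [HP ->]]; apply: (cost_lb Ha).
- by move=> s [E _]; rewrite /F /Fb /Weps E.
Qed.

Lemma F_le_cost (a : vec n) P : simplex a -> coupling a b P -> F a <= cost P.
Proof. move=> Ha HP; apply: (ER_inf_Fin_lb (F_fin Ha)); by exists P. Qed.

Lemma F_approx (a : vec n) d : simplex a -> 0 < d -> exists P, coupling a b P /\ cost P < F a + d.
Proof. move=> Ha Hd; case: (ER_inf_Fin_approx (F_fin Ha) Hd) => w [[P [HP ->]] H]; by exists P. Qed.

Lemma F_lb (a : vec n) : simplex a -> LB <= F a.
Proof.
move=> Ha; apply: Rnot_lt_le => H.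
case: (F_approx Ha (d := LB - F a) ltac:(lra)) => P [HP Hc].
have := cost_lb Ha HP; lra.
Qed.

Definition Phi (f : vec n) := Fb_star eps C b f.
Definition Sset (f : vec n) := fun v => exists a, simplex a /\ v = dot f a - F a.

Lemma dot_simplex_le (f a : vec n) : simplex a -> dot f a <= vsum (fun i => Rabs (f i)).
Proof.
move=> Ha; apply: vsum_le => i; have [H0 H1] := simplex_le1 i Ha.
case: (Rcase_abs (f i)) => Hc; [rewrite Rabs_left //| rewrite Rabs_right //]; nra.
Qed.

Lemma Phi_fin f : ER_sup (Sset f) = Fin (Phi f).
Proof.
case: (@ER_sup_fin (Sset f)).
- by exists (dot f b - F b); exists b.
- exists (vsum (fun i => Rabs (f i)) - LB) => v [a [Ha ->]].
  have := dot_simplex_le f Ha; have := F_lb Ha; lra.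
- by move=> s [E _]; rewrite /Phi /Fb_star E.
Qed.

Lemma Phi_ge f a : simplex a -> dot f a - F a <= Phi f.
Proof. move=> Ha; apply: (ER_sup_Fin_ub (Phi_fin f)); by exists a. Qed.

Lemma Phi_lub f M : (forall a, simplex a -> dot f a - F a <= M) -> Phi f <= M.
Proof. move=> H; apply: (ER_sup_Fin_lub (Phi_fin f)) => v [a [Ha ->]]; exact: H. Qed.

Lemma Phi_approx f d : 0 < d -> exists a, simplex a /\ Phi f - d < dot f a - F a.
Proof. move=> Hd; case: (ER_sup_Fin_approx (Phi_fin f) Hd) => v [[a [Ha ->]] H]; by exists a. Qed.

Lemma Phi_shift_le f c : Phi (fun i => f i + c) <= Phi f + c.
Proof.
apply: Phi_lub => a Ha; have := Phi_ge f Ha.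
have -> : dot (fun i => f i + c) a = dot f a + c.
  rewrite /dot (vsum_ext (g := fun i => f i * a i + c * a i)); last by move=> i; ring.
  rewrite vsum_add vsum_scal; by case: Ha => _ ->; ring.
lra.
Qed.

Lemma Phi_shift f c : Phi (fun i => f i + c) = Phi f + c.
Proof.
apply: Rle_antisym; first exact: Phi_shift_le.
have := Phi_shift_le (fun i => f i + c) (- c).
have -> : (fun i => f i + c + - c) = f by apply: functional_extensionality => i; ring.
lra.
Qed.

Lemma Phi_mono f f' : (forall i, f i <= f' i) -> Phi f <= Phi f'.
Proof.
move=> H; apply: Phi_lub => a Ha; have := Phi_ge f' Ha.
have : dot f a <= dot f' a.
  apply: vsum_le => i; case: Ha => Ha _; have := Ha i; have := H i; nra.
lra.
Qed.

Lemma Phi_convex : convex_fun Phi.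
Proof.
move=> f f' t Ht; apply: Phi_lub => a Ha.
have E : dot (fun i => t * f i + (1 - t) * f' i) a = t * dot f a + (1 - t) * dot f' a.
  rewrite /dot -!vsum_scal -vsum_add; apply: vsum_ext => i; ring.
rewrite E; have := Phi_ge f Ha; have := Phi_ge f' Ha.
move=> H1 H2.
have := Rmult_le_compat_l t _ _ (proj1 Ht) H2.
have := Rmult_le_compat_l (1 - t) _ _ ltac:(lra) H1.
lra.
Qed.

End OT.


Lemma Rdiv_le_0_compat a c : 0 <= a -> 0 < c -> 0 <= a / c.
Proof. move=> Ha Hc; apply: Rmult_le_pos => //; apply: Rlt_le; by apply: Rinv_0_lt_compat. Qed.

Section OT2.
Variable n : nat.
Variable eps : R.
Variable C : 'I_n -> 'I_n -> R.
Variable b : vec n.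
Hypothesis Heps : 0 < eps.
Hypothesis Hb : simplex b.

Notation F := (F eps C b).
Notation cost := (cost eps C).

Lemma simplex_mix (a a' : vec n) t : simplex a -> simplex a' -> 0 <= t <= 1 ->
  simplex (fun i => t * a i + (1 - t) * a' i).
Proof.
move=> [H0 H1] [H0' H1'] Ht; split.
- move=> i; have := H0 i; have := H0' i; nra.
- rewrite vsum_add vsum_scal vsum_scal H1 H1'; ring.
Qed.

Lemma F_convex (a a' : vec n) t : simplex a -> simplex a' -> 0 <= t <= 1 ->
  F (fun i => t * a i + (1 - t) * a' i) <= t * F a + (1 - t) * F a'.
Proof.
move=> Ha Ha' Ht; apply: Rnot_lt_le => Hlt.
set d := (F (fun i => t * a i + (1 - t) * a' i) - (t * F a + (1 - t) * F a')) / 2.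
case: (F_approx C Heps Hb Ha (d := d) ltac:(rewrite /d; lra)) => P [HP HcP].
case: (F_approx C Heps Hb Ha' (d := d) ltac:(rewrite /d; lra)) => P' [HP' HcP'].
set Q := fun i j => t * P i j + (1 - t) * P' i j.
have HQ : coupling (fun i => t * a i + (1 - t) * a' i) b Q.
  case: HP => [H0 [Hr Hc]]; case: HP' => [H0' [Hr' Hc']]; split; [|split].
  - move=> i j; rewrite /Q; have := H0 i j; have := H0' i j; nra.
  - move=> i; rewrite /Q vsum_add !vsum_scal Hr Hr' //.
  - move=> j; rewrite /Q vsum_add !vsum_scal Hc Hc'; case: Hb => _ _; ring.
have Hmix := simplex_mix Ha Ha' Ht.
have H1 := F_le_cost C Heps Hb Hmix HQ.
have H2 : cost Q <= t * cost P + (1 - t) * cost P'.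
  rewrite !cost_eq -!vsum_scal -vsum_add; apply: vsum_le => i.
  rewrite -!vsum_scal -vsum_add; apply: vsum_le => j.
  have [A0 A1] := coup_le1 i j Ha HP; have [B0 B1] := coup_le1 i j Ha' HP'.
  have := xlnx_convex A0 B0 Ht; rewrite /Q.
  move=> Hx; have : eps * xlnx (t * P i j + (1 - t) * P' i j) <= eps * (t * xlnx (P i j) + (1 - t) * xlnx (P' i j)).
    by apply: Rmult_le_compat_l; lra.
  lra.
have : t * cost P + (1 - t) * cost P' <= t * (F a + d) + (1 - t) * (F a' + d).
  apply: Rplus_le_compat; apply: Rmult_le_compat_l; lra.
rewrite /d in H1 *; lra.
Qed.

Definition dist1 (x y : vec n) := vsum (fun i => Rabs (x i - y i)).

Lemma dist1_ge0 x y : 0 <= dist1 x y.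
Proof. apply: vsum_ge0 => i; apply: Rabs_pos. Qed.

Lemma dist1_term x y i : Rabs (x i - y i) <= dist1 x y.
Proof. apply: (vsum_le_term i (fun i => Rabs_pos _)). Qed.

Definition KC := vsum (fun i => vsum (fun j : 'I_n => Rabs (C i j) + eps)).

Lemma KC_ge0 : 0 <= KC.
Proof. apply: vsum_ge0 => i; apply: vsum_ge0 => j; have := Rabs_pos (C i j); lra. Qed.

Lemma coupling_move (a a0 : vec n) P : simplex a -> simplex a0 -> coupling a b P ->
  exists P', coupling a0 b P' /\ forall i j, Rabs (P' i j - P i j) <= Rabs (a i - a0 i).
Proof.
move=> Ha Ha0 HP.
set m := fun i => Rmin (a i) (a0 i).
set r := fun i => if Rlt_dec 0 (a i) then m i / a i else 0.
have Hm1 : forall i, 0 <= a i - m i by move=> i; rewrite /m /Rmin; case: Rle_dec => H; lra.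
have Hm2 : forall i, 0 <= a0 i - m i by move=> i; rewrite /m /Rmin; case: Rle_dec => H; lra.
have Hm3 : forall i, (a i - m i) + (a0 i - m i) = Rabs (a i - a0 i).
  move=> i; rewrite /m /Rmin; case: Rle_dec => H.
  - rewrite Rabs_left1; lra.
  - rewrite Rabs_right; lra.
case: Ha => [Ha0p Ha1]; case: Ha0 => [Ha00p Ha01].
have Hm0 : forall i, 0 <= m i by move=> i; rewrite /m /Rmin; case: Rle_dec => H; auto.
have Hr : forall i, r i * a i = m i.
  move=> i; rewrite /r; case: Rlt_dec => H /=.
    rewrite /Rdiv Rmult_assoc Rinv_l; [ring| lra].
  have : a i = 0 by have := Ha0p i; lra.
  move=> E; rewrite E; have := Hm1 i; have := Hm0 i; lra.
have Hr01 : forall i, 0 <= r i <= 1.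
  move=> i; rewrite /r; case: Rlt_dec => H /=; last lra.
  split; first by apply: Rdiv_le_0_compat.
  apply: (Rmult_le_reg_r (a i)) => //; rewrite Rmult_1_l.
  have -> : m i / a i * a i = m i by field; lra.
  have := Hm1 i; lra.
case: HP => [HP0 [HPr HPc]].
set s := vsum (fun i => a0 i - m i).
have Hs0 : 0 <= s by apply: vsum_ge0.
have Hs' : vsum (fun i => a i - m i) = s.
  by rewrite /s !vsum_sub Ha1 Ha01.
set c := fun j => vsum (fun i => (1 - r i) * P i j).
have Hc0 : forall j, 0 <= c j.
  move=> j; apply: vsum_ge0 => i; have := Hr01 i; have := HP0 i j; nra.
have Hcsum : vsum c = s.
  rewrite /c vsum_swap -Hs'; apply: vsum_ext => i.
  rewrite vsum_scal HPr; have := Hr i; lra.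
have Hcb : forall j, vsum (fun i => r i * P i j) + c j = b j.
  move=> j; rewrite /c -vsum_add -HPc; apply: vsum_ext => i; ring.
have Hcs : forall j, s * c j / s = c j.
  move=> j; case: (Req_dec s 0) => Hs.
  - have : c j = 0 by apply: (vsum_eq0_nonneg Hc0); rewrite Hcsum.
    move=> ->; rewrite /Rdiv; ring.
  - by field.
have Hcle : forall j, c j / s <= 1.
  move=> j; case: (Req_dec s 0) => Hs.
  - rewrite Hs /Rdiv Rinv_0; lra.
  - apply: (Rmult_le_reg_r s); first lra.
    have -> : c j / s * s = c j by field.
    rewrite Rmult_1_l -Hcsum; exact: (vsum_le_term j Hc0).
exists (fun i j => r i * P i j + (a0 i - m i) * c j / s); split; [split; [|split]|].
- move=> i j; apply: Rplus_le_le_0_compat.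
  + have := Hr01 i; have := HP0 i j; nra.
  + apply: Rmult_le_pos; [apply: Rmult_le_pos; auto|].
    case: (Req_dec s 0) => Hs; first by rewrite Hs Rinv_0; lra.
    apply: Rlt_le; apply: Rinv_0_lt_compat; lra.
- move=> i; rewrite vsum_add vsum_scal HPr Hr.
  rewrite (vsum_ext (g := fun j => ((a0 i - m i) / s) * c j)); last by move=> j; rewrite /Rdiv; ring.
  rewrite vsum_scal Hcsum.
  case: (Req_dec s 0) => Hs.
  + have : a0 i - m i = 0 by apply: (vsum_eq0_nonneg Hm2).
    move=> E; rewrite E /Rdiv; lra.
  + field; lra.
- move=> j; rewrite vsum_add.
  rewrite (vsum_ext (f := fun i => (a0 i - m i) * c j / s) (g := fun i => (a0 i - m i) * (c j / s)));
    last by move=> i; rewrite /Rdiv; ring.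
  rewrite vsum_scalr -/s.
  have -> : s * (c j / s) = s * c j / s by rewrite /Rdiv; ring.
  rewrite Hcs; exact: Hcb.
- move=> i j.
  have -> : r i * P i j + (a0 i - m i) * c j / s - P i j
          = (a0 i - m i) * (c j / s) - (1 - r i) * P i j by rewrite /Rdiv; ring.
  rewrite -Hm3.
  have T1 : 0 <= (1 - r i) * P i j <= a i - m i.
    split; first by have := Hr01 i; have := HP0 i j; nra.
    have : P i j <= a i by rewrite -HPr; exact: (vsum_le_term j (HP0 i)).
    have := Hr i; have := Hr01 i; have := HP0 i j; nra.
  have T2 : 0 <= (a0 i - m i) * (c j / s) <= a0 i - m i.
    have Hcs0 : 0 <= c j / s.
      case: (Req_dec s 0) => Hs; first by rewrite Hs /Rdiv Rinv_0; lra.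
      apply: Rdiv_le_0_compat => //; lra.
    have := Hcle j; have := Hm2 i; nra.
  apply: Rabs_le; lra.
Qed.

Lemma F_lsc (a0 : vec n) : simplex a0 -> forall e, 0 < e -> exists d, 0 < d /\
  forall a, simplex a -> dist1 a a0 < d -> F a0 <= F a + e.
Proof.
move=> Ha0 e He.
set e' := e / (4 * (eps * INR n * INR n + 1)).
have Hnn : 0 <= eps * INR n * INR n by have := pos_INR n; nra.
have He' : 0 < e' by rewrite /e'; apply: Rdiv_lt_0_compat; lra.
case: (xlnx_unif He') => d' [Hd' Hunif].
exists (Rmin d' (e / (4 * (KC + 1)))); split.
  apply: Rmin_pos => //; apply: Rdiv_lt_0_compat; have := KC_ge0; lra.
move=> a Ha Hd.
have Hd1 : dist1 a a0 < d' by apply: Rlt_le_trans Hd (Rmin_l _ _).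
have Hd2 : dist1 a a0 < e / (4 * (KC + 1)) by apply: Rlt_le_trans Hd (Rmin_r _ _).
case: (F_approx C Heps Hb Ha (d := e / 2) ltac:(lra)) => P [HP HcP].
case: (coupling_move Ha Ha0 HP) => P' [HP' Hclose].
have H1 := F_le_cost C Heps Hb Ha0 HP'.
have H2 : cost P' <= cost P + dist1 a a0 * KC + eps * INR n * INR n * e'.
  rewrite !cost_eq.
  have -> : eps * INR n * INR n * e' = vsum (fun i : 'I_n => vsum (fun j : 'I_n => eps * e')).
    rewrite vsum_const vsum_const; ring.
  rewrite /KC -vsum_scal -!vsum_add; apply: vsum_le => i.
  rewrite -vsum_scal -!vsum_add; apply: vsum_le => j.
  have [A0 A1] := coup_le1 i j Ha HP; have [B0 B1] := coup_le1 i j Ha0 HP'.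
  have Hcl := Hclose i j.
  have Hdt := dist1_term a a0 i.
  have Hx : Rabs (xlnx (P' i j) - xlnx (P i j)) < e'.
    apply: Hunif => //; have := dist1_ge0 a a0; lra.
  have L1 : P' i j * C i j - P i j * C i j <= dist1 a a0 * Rabs (C i j).
    have -> : P' i j * C i j - P i j * C i j = (P' i j - P i j) * C i j by ring.
    apply: Rle_trans (Rle_abs _) _; rewrite Rabs_mult.
    apply: Rmult_le_compat_r; [apply: Rabs_pos| lra].
  have L2 : - (P' i j - P i j) <= dist1 a a0.
    apply: Rle_trans (_ : Rabs (P' i j - P i j) <= _); last lra.
    rewrite -Rabs_Ropp; apply: Rle_abs.
  have L3 : xlnx (P' i j) - xlnx (P i j) <= e'.
    apply: Rle_trans (Rle_abs _) _; lra.
  have : eps * (xlnx (P' i j) - xlnx (P i j)) <= eps * e' by apply: Rmult_le_compat_l; lra.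
  have : eps * (- (P' i j - P i j)) <= eps * dist1 a a0 by apply: Rmult_le_compat_l; lra.
  nra.
have H3 : dist1 a a0 * KC <= e / 4.
  have HK := KC_ge0.
  have : dist1 a a0 * (KC + 1) <= e / 4.
    apply: Rle_trans (_ : e / (4 * (KC + 1)) * (KC + 1) <= _).
    - apply: Rmult_le_compat_r; lra.
    - right; field; lra.
  have := dist1_ge0 a a0; nra.
have H4 : eps * INR n * INR n * e' <= e / 4.
  rewrite /e'; apply: (Rmult_le_reg_r (4 * (eps * INR n * INR n + 1))); first lra.
  have -> : eps * INR n * INR n * (e / (4 * (eps * INR n * INR n + 1))) * (4 * (eps * INR n * INR n + 1))
    = eps * INR n * INR n * e by field; lra.
  nra.
lra.
Qed.

End OT2.


Lemma inf_convex_helper (E1 E2 : R -> Prop) s1 s2 t X :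
  ER_inf E1 = Fin s1 -> ER_inf E2 = Fin s2 -> 0 <= t <= 1 ->
  (forall u v, E1 u -> E2 v -> X <= t * u + (1 - t) * v) -> X <= t * s1 + (1 - t) * s2.
Proof.
move=> H1 H2 Ht H; apply: Rnot_lt_le => Hlt.
set g := (X - (t * s1 + (1 - t) * s2)) / 2.
case: (ER_inf_Fin_approx H1 (e := g) ltac:(rewrite /g; lra)) => u [Eu Hu].
case: (ER_inf_Fin_approx H2 (e := g) ltac:(rewrite /g; lra)) => v [Ev Hv].
have := H u v Eu Ev.
have : t * u + (1 - t) * v <= t * (s1 + g) + (1 - t) * (s2 + g).
  apply: Rplus_le_compat; apply: Rmult_le_compat_l; lra.
rewrite /g; lra.
Qed.

Section Biconj.
Variable n : nat.
Variable eps : R.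
Variable C : 'I_n -> 'I_n -> R.
Variable b : vec n.
Hypothesis Heps : 0 < eps.
Hypothesis Hb : simplex b.

Notation F := (F eps C b).
Notation Phi := (Phi eps C b).

Variable M : R.
Hypothesis HM : 0 <= M.

Definition HS (x : vec n) := fun v => exists a, simplex a /\ v = F a + M * dist1 x a.
Definition Hx (x : vec n) := ER_real (ER_inf (HS x)).

Lemma Hx_fin x : ER_inf (HS x) = Fin (Hx x).
Proof.
case: (@ER_inf_fin (HS x)).
- by exists (F b + M * dist1 x b); exists b.
- exists (LB eps C) => v [a [Ha ->]].
  have := F_lb C Heps Hb Ha; have := dist1_ge0 x a; nra.
- by move=> s [E _]; rewrite /Hx E.
Qed.

Lemma Hx_le x a : simplex a -> Hx x <= F a + M * dist1 x a.
Proof. move=> Ha; apply: (ER_inf_Fin_lb (Hx_fin x)); by exists a. Qed.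

Lemma Hx_convex : convex_fun Hx.
Proof.
move=> x y t Ht; apply: (inf_convex_helper (Hx_fin x) (Hx_fin y) Ht).
move=> u v [a [Ha ->]] [a' [Ha' ->]].
have Hm := simplex_mix Ha Ha' Ht.
apply: Rle_trans (Hx_le _ Hm) _.
have H1 := F_convex C Heps Hb Ha Ha' Ht.
have H2 : dist1 (fun i => t * x i + (1 - t) * y i) (fun i => t * a i + (1 - t) * a' i)
          <= t * dist1 x a + (1 - t) * dist1 y a'.
  rewrite /dist1 -!vsum_scal -vsum_add; apply: vsum_le => i.
  have -> : t * x i + (1 - t) * y i - (t * a i + (1 - t) * a' i) = t * (x i - a i) + (1 - t) * (y i - a' i) by ring.
  apply: Rle_trans (Rabs_triang _ _) _; rewrite !Rabs_mult (Rabs_right t) ?(Rabs_right (1 - t)); lra.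
have : M * dist1 (fun i => t * x i + (1 - t) * y i) (fun i => t * a i + (1 - t) * a' i)
       <= M * (t * dist1 x a + (1 - t) * dist1 y a') by apply: Rmult_le_compat_l.
lra.
Qed.

End Biconj.

Lemma dist1_sym n (x y : vec n) : dist1 x y = dist1 y x.
Proof. apply: vsum_ext => i; apply: Rabs_minus_sym. Qed.

Lemma biconj n eps (C : 'I_n -> 'I_n -> R) (b : vec n) : 0 < eps -> simplex b ->
  forall a0, simplex a0 -> forall e, 0 < e -> exists f : vec n,
  F eps C b a0 <= dot f a0 - Phi eps C b f + e.
Proof.
move=> Heps Hb a0 Ha0 e He.
case: (F_lsc C Heps Hb Ha0 (e := e / 2) ltac:(lra)) => d [Hd Hlsc].
have HLB := F_lb C Heps Hb Ha0.
set M := (F eps C b a0 - LB eps C + e) / d.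
have HM : 0 <= M by rewrite /M; apply: Rdiv_le_0_compat => //; lra.
case: (subgradient_exists (Hx_convex C Heps Hb HM) a0) => f Hf.
exists f.
have HPhi : Phi eps C b f <= dot f a0 - Hx eps C b M a0.
  apply: Phi_lub => // a Ha.
  have := Hf a; have := Hx_le C Heps Hb HM a Ha.
  rewrite /dist1 (vsum_ext (f := fun i => Rabs (a i - a i)) (g := fun _ => 0)); last first.
    by move=> i; rewrite Rminus_diag Rabs_R0.
  rewrite vsum0 dot_subr; lra.
have Hclose : F eps C b a0 - e <= Hx eps C b M a0.
  apply: Rnot_lt_le => Hlt.
  case: (ER_inf_Fin_approx (Hx_fin C Heps Hb HM a0) (e := e / 2) ltac:(lra)) => v [[a [Ha ->]] Hv].
  have HFa := F_lb C Heps Hb Ha.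
  case: (Rlt_le_dec (dist1 a a0) d) => Hda.
  - have := Hlsc a Ha Hda; have := dist1_ge0 a0 a; nra.
  - rewrite dist1_sym in Hda.
    have : M * d <= M * dist1 a0 a by apply: Rmult_le_compat_l.
    have -> : M * d = F eps C b a0 - LB eps C + e by rewrite /M; field; lra.
    lra.
lra.
Qed.


Section Gibbs.
Variable n : nat.
Variable eps : R.
Variable C : 'I_n -> 'I_n -> R.
Variable b : vec n.
Hypothesis Heps : 0 < eps.
Hypothesis Hb : simplex b.

Notation F := (F eps C b).
Notation Phi := (Phi eps C b).
Notation cost := (cost eps C).

Definition Zf (f : vec n) (j : 'I_n) := vsum (fun i => exp ((f i - C i j) / eps)).
Definition Psi (f : vec n) := eps * vsum (fun j => b j * ln (Zf f j)) - eps * vsum (fun j => xlnx (b j)) + eps.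
Definition Gc (f : vec n) (i j : 'I_n) := b j * exp ((f i - C i j) / eps) / Zf f j.
Definition rr (f : vec n) : vec n := fun i => vsum (fun j => Gc f i j).

Lemma Zf_pos f j : 0 < Zf f j.
Proof.
apply: Rlt_le_trans (exp_pos ((f j - C j j) / eps)) _.
apply: (vsum_le_term j (fun i => Rlt_le _ _ (exp_pos _))).
Qed.

Lemma Gc_ge0 f i j : 0 <= Gc f i j.
Proof.
apply: Rdiv_le_0_compat; last exact: Zf_pos.
apply: Rmult_le_pos; [case: Hb => H _; exact: H| apply: Rlt_le; exact: exp_pos].
Qed.

Lemma Gc_col f j : vsum (fun i => Gc f i j) = b j.
Proof.
rewrite /Gc (vsum_ext (g := fun i => (b j / Zf f j) * exp ((f i - C i j) / eps))); last by move=> i; rewrite /Rdiv; ring.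
rewrite vsum_scal -/(Zf f j); field; have := Zf_pos f j; lra.
Qed.

Lemma rr_simplex f : simplex (rr f).
Proof.
split; first by move=> i; apply: vsum_ge0 => j; apply: Gc_ge0.
rewrite /rr vsum_swap (vsum_ext (g := b)); [by case: Hb| exact: Gc_col].
Qed.

Lemma Gc_coupling f : coupling (rr f) b (Gc f).
Proof. split; [exact: Gc_ge0| split; [by [] | exact: Gc_col]]. Qed.

Lemma term_ineq (q u Bj Z : R) : 0 <= q -> 0 < Bj -> 0 < Z ->
  q * u - xlnx q <= q * (ln Z - ln Bj) - q + exp u * Bj / Z.
Proof.
move=> Hq HB HZ.
have Hz : 0 < exp u * Bj / Z by apply: Rdiv_lt_0_compat => //; apply: Rmult_lt_0_compat => //; apply: exp_pos.
have := xlnx_tangent Hq Hz.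
rewrite /Rdiv ln_mult ?ln_mult ?ln_Rinv ?ln_exp //; try (apply: Rinv_0_lt_compat => //); try apply: exp_pos.
  lra.
by apply: Rmult_lt_0_compat => //; apply: exp_pos.
Qed.

Lemma term_eq (u Bj Z : R) : 0 < Bj -> 0 < Z ->
  let q := Bj * exp u / Z in q * u - xlnx q = q * (ln Z - ln Bj) - q + exp u * Bj / Z.
Proof.
move=> HB HZ q.
have Hq : 0 < q by rewrite /q; apply: Rdiv_lt_0_compat => //; apply: Rmult_lt_0_compat => //; apply: exp_pos.
rewrite xlnx_pos // /q /Rdiv ln_mult ?ln_mult ?ln_Rinv ?ln_exp //;
  try (apply: Rinv_0_lt_compat => //); try apply: exp_pos.
  ring.
by apply: Rmult_lt_0_compat => //; apply: exp_pos.
Qed.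

Lemma column_ineq (q : vec n) j f : (forall i, 0 <= q i) -> vsum q = b j ->
  vsum (fun i => q i * ((f i - C i j) / eps) - xlnx (q i)) <= b j * ln (Zf f j) - xlnx (b j).
Proof.
move=> Hq Hs; case: Hb => Hb0 Hb1.
case: (Req_dec (b j) 0) => HB.
- have Hq0 : forall i, q i = 0 by apply: (vsum_eq0_nonneg Hq); rewrite Hs.
  rewrite HB xlnx_nonpos; last lra.
  rewrite (vsum_ext (g := fun _ => 0)); first by rewrite vsum0; lra.
  by move=> i; rewrite Hq0 xlnx_nonpos; [ring| lra].
- have HB' : 0 < b j by have := Hb0 j; lra.
  apply: Rle_trans (_ : vsum (fun i => q i * (ln (Zf f j) - ln (b j)) - q i + exp ((f i - C i j) / eps) * b j / Zf f j) <= _).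
    apply: vsum_le => i; apply: term_ineq => //; exact: Zf_pos.
  rewrite vsum_add vsum_sub vsum_scalr Hs.
  rewrite (vsum_ext (g := fun i => (b j / Zf f j) * exp ((f i - C i j) / eps))); last by move=> i; rewrite /Rdiv; ring.
  rewrite vsum_scal -/(Zf f j) xlnx_pos //.
  have := Zf_pos f j => HZ; right; field; lra.
Qed.

Lemma column_eq j f :
  vsum (fun i => Gc f i j * ((f i - C i j) / eps) - xlnx (Gc f i j)) = b j * ln (Zf f j) - xlnx (b j).
Proof.
case: Hb => Hb0 Hb1.
case: (Req_dec (b j) 0) => HB.
- rewrite HB xlnx_nonpos; last lra.
  rewrite (vsum_ext (g := fun _ => 0)); first by rewrite vsum0; lra.
  move=> i; rewrite /Gc HB /Rdiv !Rmult_0_l xlnx_nonpos; [ring| lra].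
- have HB' : 0 < b j by have := Hb0 j; lra.
  rewrite (vsum_ext (g := fun i => Gc f i j * (ln (Zf f j) - ln (b j)) - Gc f i j + exp ((f i - C i j) / eps) * b j / Zf f j)).
  + rewrite vsum_add vsum_sub vsum_scalr Gc_col.
    rewrite (vsum_ext (g := fun i => (b j / Zf f j) * exp ((f i - C i j) / eps))); last by move=> i; rewrite /Rdiv; ring.
    rewrite vsum_scal -/(Zf f j) xlnx_pos //.
    have := Zf_pos f j => HZ; field; lra.
  + move=> i; exact: (term_eq ((f i - C i j) / eps) HB' (Zf_pos f j)).
Qed.

Lemma gap_form (f a : vec n) P : coupling a b P ->
  dot f a - cost P = eps * vsum (fun j => vsum (fun i => P i j * ((f i - C i j) / eps) - xlnx (P i j))) + eps.
Proof.
move=> [H0 [Hr Hc]].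
have L : dot f a - cost P = vsum (fun i => vsum (fun j => f i * P i j - (P i j * C i j + eps * (xlnx (P i j) - P i j)))).
  rewrite cost_eq /dot -(vsum_sub (fun i => f i * a i)); apply: vsum_ext => i.
  by rewrite -(Hr i) -vsum_scal -vsum_sub.
have E : eps = vsum (fun i => vsum (fun j => eps * P i j)).
  rewrite vsum_swap (vsum_ext (g := fun j => eps * b j)); last by move=> j; rewrite vsum_scal Hc.
  rewrite vsum_scal; case: Hb => _ ->; ring.
have R : eps * vsum (fun j => vsum (fun i => P i j * ((f i - C i j) / eps) - xlnx (P i j)))
   = vsum (fun i => vsum (fun j => eps * (P i j * ((f i - C i j) / eps) - xlnx (P i j)))).
  rewrite -vsum_scal vsum_swap; apply: vsum_ext => i; by rewrite vsum_scal.
rewrite L R [X in _ = _ + X]E -vsum_add; apply: vsum_ext => i; rewrite -vsum_add; apply: vsum_ext => j.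
field; lra.
Qed.

Lemma gap_le (f a : vec n) P : coupling a b P -> dot f a - cost P <= Psi f.
Proof.
move=> HP; rewrite gap_form // /Psi.
have : vsum (fun j => vsum (fun i => P i j * ((f i - C i j) / eps) - xlnx (P i j)))
   <= vsum (fun j => b j * ln (Zf f j) - xlnx (b j)).
  apply: vsum_le => j; case: HP => [H0 [_ Hc]]; apply: column_ineq => //.
rewrite vsum_sub => H.
have := Rmult_le_compat_l eps _ _ (Rlt_le _ _ Heps) H; lra.
Qed.

Lemma gap_eq (f : vec n) : dot f (rr f) - cost (Gc f) = Psi f.
Proof.
rewrite gap_form; last exact: Gc_coupling.
rewrite /Psi (vsum_ext (f := fun j => vsum (fun i => Gc f i j * ((f i - C i j) / eps) - xlnx (Gc f i j))) (g := fun j => b j * ln (Zf f j) - xlnx (b j))); last by move=> j; exact: column_eq.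
rewrite vsum_sub; ring.
Qed.

Lemma Phi_Psi f : Phi f = Psi f.
Proof.
apply: Rle_antisym.
- apply: Phi_lub => // a Ha; apply: Rnot_lt_le => Hlt.
  case: (F_approx C Heps Hb Ha (d := dot f a - F a - Psi f) ltac:(lra)) => P [HP HcP].
  have := gap_le f HP; lra.
- have := Phi_ge C Heps Hb f (rr_simplex f).
  have := F_le_cost C Heps Hb (rr_simplex f) (Gc_coupling f).
  have := gap_eq f; lra.
Qed.

Lemma F_rr f : F (rr f) = dot f (rr f) - Phi f.
Proof.
apply: Rle_antisym.
- have := F_le_cost C Heps Hb (rr_simplex f) (Gc_coupling f); have := gap_eq f; rewrite Phi_Psi; lra.
- have := Phi_ge C Heps Hb f (rr_simplex f); lra.
Qed.

Lemma Phi_lower f h : Phi f + dot h (rr f) <= Phi (vadd f h).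
Proof.
have := Phi_ge C Heps Hb (vadd f h) (rr_simplex f).
rewrite dot_addl F_rr; lra.
Qed.

Lemma exp_quad x : Rabs x <= / 2 -> exp x - 1 <= x + 2 * (x * x).
Proof.
move=> Hx; have Hx' : - / 2 <= x <= / 2.
  move: Hx; case: (Rcase_abs x) => H; [rewrite Rabs_left // | rewrite Rabs_right //]; lra.
have H1 := exp_ineq1_le (- x).
have Hpos : 0 < 1 - x by lra.
have H2 : exp x * (1 - x) <= 1.
  have : exp x * exp (- x) = 1 by rewrite -exp_plus Rplus_opp_r exp_0.
  have := exp_pos x; nra.
have H3 : exp x <= / (1 - x).
  apply: (Rmult_le_reg_r (1 - x)) => //; rewrite Rinv_l; lra.
have H4 : / (1 - x) - 1 - x <= 2 * (x * x).
  apply: (Rmult_le_reg_r (1 - x)) => //.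
  have -> : (/ (1 - x) - 1 - x) * (1 - x) = x * x by field; lra.
  nra.
lra.
Qed.

Lemma Phi_upper f h : (forall i, Rabs (h i) <= eps / 2) ->
  Phi (vadd f h) <= Phi f + dot h (rr f) + 2 / eps * dot h h.
Proof.
move=> Hh; rewrite !Phi_Psi /Psi.
set pi := fun i j => exp ((f i - C i j) / eps) / Zf f j.
have Hratio : forall j, Zf (vadd f h) j / Zf f j = vsum (fun i => pi i j * exp (h i / eps)).
  move=> j; rewrite (vsum_ext (f := fun i => pi i j * exp (h i / eps)) (g := fun i => exp ((vadd f h i - C i j) / eps) * / Zf f j)).
  - by rewrite vsum_scalr.
  - move=> i; rewrite /pi /vadd /Rdiv.
    have -> : (f i + h i - C i j) * / eps = (f i - C i j) * / eps + h i * / eps by ring.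
    rewrite exp_plus; ring.
have Hpisum : forall j, vsum (fun i => pi i j) = 1.
  move=> j; rewrite /pi /Rdiv vsum_scalr -/(Zf f j); field; have := Zf_pos f j; lra.
have Hpi0 : forall i j, 0 <= pi i j.
  move=> i j; apply: Rdiv_le_0_compat; [apply: Rlt_le; exact: exp_pos| exact: Zf_pos].
have Hlog : forall j, ln (Zf (vadd f h) j) - ln (Zf f j)
      <= vsum (fun i => pi i j * (h i / eps + 2 * (h i / eps * (h i / eps)))).
  move=> j.
  have -> : ln (Zf (vadd f h) j) - ln (Zf f j) = ln (Zf (vadd f h) j / Zf f j).
    rewrite /Rdiv ln_mult; [rewrite ln_Rinv; [ring| exact: Zf_pos] | exact: Zf_pos | apply: Rinv_0_lt_compat; exact: Zf_pos].
  apply: Rle_trans (ln_le_sub1 _) _.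
    apply: Rdiv_lt_0_compat; exact: Zf_pos.
  rewrite Hratio -(Hpisum j) -vsum_sub; apply: vsum_le => i.
  have : exp (h i / eps) - 1 <= h i / eps + 2 * (h i / eps * (h i / eps)).
    apply: exp_quad; rewrite /Rdiv Rabs_mult (Rabs_right (/ eps)); last by apply: Rle_ge; apply: Rlt_le; apply: Rinv_0_lt_compat.
    apply: (Rmult_le_reg_r eps) => //; rewrite Rmult_assoc Rinv_l; have := Hh i; lra.
  have := Hpi0 i j; nra.
have Hrr : forall i, rr f i = vsum (fun j => b j * pi i j).
  by move=> i; apply: vsum_ext => j; rewrite /Gc /pi /Rdiv; ring.
have Hmain : eps * vsum (fun j => b j * ln (Zf (vadd f h) j)) - eps * vsum (fun j => b j * ln (Zf f j))
   <= dot h (rr f) + 2 / eps * vsum (fun i => h i * h i * rr f i).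
  rewrite -vsum_scal -vsum_scal -vsum_sub.
  apply: Rle_trans (_ : vsum (fun j => eps * b j * vsum (fun i => pi i j * (h i / eps + 2 * (h i / eps * (h i / eps))))) <= _).
    apply: vsum_le => j; have := Hlog j; case: Hb => Hb0 _; have := Hb0 j => Hbj H.
    have : eps * b j * (ln (Zf (vadd f h) j) - ln (Zf f j)) <=
           eps * b j * vsum (fun i => pi i j * (h i / eps + 2 * (h i / eps * (h i / eps)))).
      by apply: Rmult_le_compat_l => //; apply: Rmult_le_pos; lra.
    lra.
  right.
  rewrite /dot -vsum_scal -vsum_add.
  rewrite (vsum_ext (f := fun i => h i * rr f i + 2 / eps * (h i * h i * rr f i))
                    (g := fun i => vsum (fun j => b j * pi i j * (h i + 2 / eps * (h i * h i))))); last first.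
    move=> i; rewrite Hrr vsum_scalr; ring.
  rewrite vsum_swap; apply: vsum_ext => j.
  rewrite -vsum_scal; apply: vsum_ext => i; field; lra.
have Hsq : vsum (fun i => h i * h i * rr f i) <= dot h h.
  apply: vsum_le => i; have [H0 H1] := simplex_le1 i (rr_simplex f).
  have := Rle_0_sqr (h i); rewrite /Rsqr; nra.
have : 2 / eps * vsum (fun i => h i * h i * rr f i) <= 2 / eps * dot h h.
  apply: Rmult_le_compat_l => //; apply: Rdiv_le_0_compat; lra.
lra.
Qed.

Lemma Phi_gradient f : is_gradient Phi f (rr f).
Proof.
move=> e He.
exists (Rmin (eps / 2) (e * eps / 2)); split.
  apply: Rmin_pos; nra.
move=> h Hh.
have Hn0 := sqrt_pos (dot h h).
have Hhi : forall i, Rabs (h i) <= vnorm h.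
  move=> i; rewrite /vnorm -sqrt_Rsqr_abs; apply: sqrt_le_1_alt.
  rewrite /Rsqr; exact: (vsum_le_term i (fun i => Rle_0_sqr (h i))).
have Hh1 : vnorm h < eps / 2 by apply: Rlt_le_trans Hh (Rmin_l _ _).
have Hh2 : vnorm h < e * eps / 2 by apply: Rlt_le_trans Hh (Rmin_r _ _).
have Hup := Phi_upper f (h := h) (fun i => Rlt_le _ _ (Rle_lt_trans _ _ _ (Hhi i) Hh1)).
have Hlo := Phi_lower f h.
have Hdd : dot h h = vnorm h * vnorm h by rewrite /vnorm sqrt_sqrt //; apply: dot_ge0.
rewrite dot_sym in Hup Hlo.
rewrite Rabs_right; last lra.
have : 2 / eps * dot h h <= e * vnorm h.
  rewrite Hdd.
  have : 2 / eps * (vnorm h * vnorm h) = (2 / eps * vnorm h) * vnorm h by ring.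
  move=> ->; apply: Rmult_le_compat_r => //.
  apply: (Rmult_le_reg_r (eps / 2)); first lra.
  have -> : 2 / eps * vnorm h * (eps / 2) = vnorm h by field; lra.
  have : vnorm h <= e * (eps / 2) by lra.
  done.
lra.
Qed.

End Gibbs.


Lemma conj_ub p (J : vec p -> R) g j : conj_star J g = Fin j -> forall y, dot g y - J y <= j.
Proof. move=> H y; apply: (ER_sup_Fin_ub H); by exists y. Qed.

Lemma conj_fin p (J : vec p -> R) g M : (forall y, dot g y - J y <= M) ->
  exists j, conj_star J g = Fin j /\ j <= M.
Proof.
move=> H; case: (@ER_sup_fin (fun v => exists y, v = dot g y - J y)).
- by exists (dot g (@vzero p) - J (@vzero p)); exists (@vzero p).
- by exists M => v [y ->].
- move=> s [E [_ H2]]; exists s; split => //; apply: H2 => v [y ->]; exact: H.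
Qed.

Lemma conj_attained p (J : vec p -> R) g y0 : (forall y, dot g y - J y <= dot g y0 - J y0) ->
  conj_star J g = Fin (dot g y0 - J y0).
Proof. move=> H; apply: ER_sup_attained; [by exists y0| by move=> v [y ->]]. Qed.

Lemma conj_nonMInf p (J : vec p -> R) g : conj_star J g <> MInf.
Proof. apply: ER_sup_nonMInf; by exists (dot g (@vzero p) - J (@vzero p)); exists (@vzero p). Qed.

Lemma ER_plusR_Fin s x v : ER_plusR s x = Fin v -> exists j, x = Fin j /\ v = s + j.
Proof. case: x => //= j [<-]; by exists j. Qed.

Lemma adj_mix n p (A : vec n -> vec p) Astar : is_adjoint A Astar ->
  forall (g g' : vec p) t, forall i,
  Astar (fun l => t * g l + (1 - t) * g' l) i = t * Astar g i + (1 - t) * Astar g' i.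
Proof.
move=> Hadj g g' t; apply: vec_ext_dot => z.
rewrite dot_sym -Hadj.
have -> : dot (fun i => t * Astar g i + (1 - t) * Astar g' i) z
        = t * dot z (Astar g) + (1 - t) * dot z (Astar g').
  rewrite /dot -!vsum_scal -vsum_add; apply: vsum_ext => i; ring.
rewrite -!Hadj /dot -!vsum_scal -vsum_add; apply: vsum_ext => i; ring.
Qed.

Lemma adj_add n p (A : vec n -> vec p) Astar : is_adjoint A Astar ->
  forall (g w : vec p) i, Astar (vadd g w) i = Astar g i + Astar w i.
Proof.
move=> Hadj g w; apply: vec_ext_dot => z.
rewrite dot_sym -Hadj dot_addr !Hadj.
rewrite /dot -vsum_add; apply: vsum_ext => i; ring.
Qed.

Lemma vsum_swap_dot n N (lam : vec N) (f : 'I_N -> vec n) (a : vec n) :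
  vsum (fun k => lam k * dot (f k) a) = dot (fun i => vsum (fun k => lam k * f k i)) a.
Proof.
rewrite /dot (vsum_ext (f := fun k => lam k * vsum (fun i => f k i * a i))
                       (g := fun k => vsum (fun i => lam k * f k i * a i))); last first.
  by move=> k; rewrite -vsum_scal; apply: vsum_ext => i; ring.
rewrite vsum_swap; apply: vsum_ext => i; by rewrite vsum_scalr.
Qed.


Lemma vsum_upd N (F : 'I_N -> R) (k : 'I_N) G :
  vsum (fun k' => if k' == k then G else F k') = vsum F + (G - F k).
Proof.
rewrite (vsum_ext (g := fun k' => F k' + (if k' == k then G - F k else 0))); last first.
  by move=> k'; case: eqP => [->|_]; ring.
rewrite vsum_add (@vsum_single _ (fun i => if i == k then G - F k else 0) k) ?eqxx // => i /negbTE ->; done.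
Qed.

Section Main.
Variables (n N p : nat) (eps : R) (C : 'I_n -> 'I_n -> R) (b : 'I_N -> vec n) (lam : vec N)
  (A : vec n -> vec p) (Astar : vec p -> vec n) (J : vec p -> R).
Hypothesis Heps : 0 < eps.
Hypothesis Hb : forall k, simplex (b k).
Hypothesis Hlam : simplex lam.
Hypothesis Hlampos : forall k, 0 < lam k.
Hypothesis Hadj : is_adjoint A Astar.
Hypothesis HJ : convex_fun J.

Definition Pobj a := primal_obj eps C b lam A J a.
Definition feas (x : vec n) (f : 'I_N -> vec n) (g : vec p) :=
  forall i, Astar g i + vsum (fun k => lam k * f k i) = x i.
Definition DS (x : vec n) := fun v => exists (f : 'I_N -> vec n) (g : vec p),
  feas x f g /\ dual_obj eps C b lam J f g = Fin v.
Definition dsum (f : 'I_N -> vec n) := vsum (fun k => lam k * Phi eps C (b k) (f k)).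

Lemma DS_elim x v : DS x v -> exists f g j, feas x f g /\ conj_star J g = Fin j /\ v = dsum f + j.
Proof.
move=> [f [g [Hf Hd]]]; case: (ER_plusR_Fin Hd) => j [Hj ->]; by exists f, g, j.
Qed.

Lemma DS_intro x f g j : feas x f g -> conj_star J g = Fin j -> DS x (dsum f + j).
Proof. move=> Hf Hj; exists f, g; split => //; rewrite /dual_obj Hj //. Qed.

Lemma k0_ex : exists k0 : 'I_N, 0 < lam k0.
Proof. case: Hlam => H0 H1; apply: vsum_exists_pos => //; lra. Qed.

Lemma feas_dot x f g a : feas x f g -> vsum (fun k => lam k * dot (f k) a) = dot x a - dot g (A a).
Proof.
move=> Hf; rewrite vsum_swap_dot (dot_sym g) Hadj (dot_sym a (Astar g)).
rewrite -dot_subl; apply: dot_ext => // i; rewrite /vsub -(Hf i); ring.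
Qed.

Lemma weak x a v : simplex a -> DS x v -> dot x a - Pobj a <= v.
Proof.
move=> Ha /DS_elim [f [g [j [Hf [Hj ->]]]]].
have H1 : vsum (fun k => lam k * dot (f k) a - lam k * F eps C (b k) a) <= dsum f.
  apply: vsum_le => k; rewrite -Rmult_minus_distr_l; apply: Rmult_le_compat_l; first exact: Rlt_le.
  exact: Phi_ge.
have H2 := conj_ub Hj (A a).
rewrite vsum_sub (feas_dot a Hf) /F in H1.
rewrite /Pobj /primal_obj; lra.
Qed.

Lemma g0_ex : exists g0 j0, conj_star J g0 = Fin j0.
Proof.
case: (subgradient_exists HJ (@vzero p)) => g0 Hg0; exists g0.
case: (@conj_fin p J g0 (- J (@vzero p))) => [y|j [Hj _]]; last by exists j.
have := Hg0 y; have -> : dot g0 (vsub y (@vzero p)) = dot g0 y.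
  by apply: dot_ext => // i; rewrite /vsub /vzero; ring.
lra.
Qed.

Lemma DS_ne x : exists v, DS x v.
Proof.
case: k0_ex => k0 Hk0; case: g0_ex => g0 [j0 Hj0].
set f := fun k => if k == k0 then (fun i => (x i - Astar g0 i) / lam k0) else (@vzero n).
exists (dsum f + j0); apply: DS_intro Hj0 => i.
rewrite (vsum_single (k := k0)).
- rewrite /f eqxx; field; lra.
- by move=> k /negbTE Hk; rewrite /f Hk /vzero; ring.
Qed.

Definition omega x := ER_real (ER_inf (DS x)).

Lemma omega_fin x : ER_inf (DS x) = Fin (omega x).
Proof.
case: k0_ex => k0 _.
case: (@ER_inf_fin (DS x)).
- exact: DS_ne.
- exists (dot x (b k0) - Pobj (b k0)) => v Hv; exact: weak.
- by move=> s [E _]; rewrite /omega E.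
Qed.

Lemma omega_le x v : DS x v -> omega x <= v.
Proof. move=> H; exact: (ER_inf_Fin_lb (omega_fin x) H). Qed.

Lemma omega_approx x d : 0 < d -> exists v, DS x v /\ v < omega x + d.
Proof. move=> Hd; exact: (ER_inf_Fin_approx (omega_fin x) Hd). Qed.

Lemma omega_glb x M : (forall v, DS x v -> M <= v) -> M <= omega x.
Proof.
move=> H; apply: Rnot_lt_le => Hlt.
case: (omega_approx x (d := M - omega x) ltac:(lra)) => v [Hv Hv']; have := H v Hv; lra.
Qed.

Lemma omega_convex : convex_fun omega.
Proof.
move=> x y t Ht; apply: (inf_convex_helper (omega_fin x) (omega_fin y) Ht).
move=> u v /DS_elim [f [g [j [Hf [Hj ->]]]]] /DS_elim [f' [g' [j' [Hf' [Hj' ->]]]]].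
set f'' := fun k => fun i => t * f k i + (1 - t) * f' k i.
set g'' := fun l => t * g l + (1 - t) * g' l.
case: (@conj_fin p J g'' (t * j + (1 - t) * j')) => [z|j'' [Hj'' Hle]].
  have := conj_ub Hj z; have := conj_ub Hj' z.
  have -> : dot g'' z - J z = t * (dot g z - J z) + (1 - t) * (dot g' z - J z).
    have E : dot g'' z = t * dot g z + (1 - t) * dot g' z.
      by rewrite /g'' /dot -!vsum_scal -vsum_add; apply: vsum_ext => i; ring.
    rewrite E; ring.
  move=> H1 H2.
  have := Rmult_le_compat_l t _ _ (proj1 Ht) H2.
  have := Rmult_le_compat_l (1 - t) _ _ ltac:(lra) H1.
  lra.
have Hfeas : feas (fun i => t * x i + (1 - t) * y i) f'' g''.
  move=> i; rewrite /g'' (adj_mix Hadj) /f''.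
  rewrite (vsum_ext (g := fun k => t * (lam k * f k i) + (1 - t) * (lam k * f' k i))); last by move=> k; ring.
  rewrite vsum_add !vsum_scal -(Hf i) -(Hf' i); ring.
apply: Rle_trans (omega_le (DS_intro Hfeas Hj'')) _.
have : dsum f'' <= t * dsum f + (1 - t) * dsum f'.
  rewrite /dsum -!vsum_scal -vsum_add; apply: vsum_le => k.
  have := Phi_convex C Heps (Hb k) (f k) (f' k) Ht; rewrite -/(f'' k) => H.
  have := Hlampos k => Hl.
  have := Rmult_le_compat_l (lam k) _ _ (Rlt_le _ _ Hl) H; lra.
lra.
Qed.

Lemma perturb_f f g j k z : feas (@vzero n) f g -> conj_star J g = Fin j ->
  omega (vscal (lam k) z) <= dsum f + j + lam k * (Phi eps C (b k) (vadd (f k) z) - Phi eps C (b k) (f k)).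
Proof.
move=> Hf Hj.
set f' := fun k' => if k' == k then vadd (f k) z else f k'.
have Hfeas : feas (vscal (lam k) z) f' g.
  move=> i.
  rewrite (vsum_ext (g := fun k' => if k' == k then lam k * (f k i + z i) else lam k' * f k' i)); last first.
    by move=> k'; rewrite /f'; case: eqP => [->|_] //.
  rewrite vsum_upd; have := Hf i; rewrite /vzero /vscal; lra.
apply: Rle_trans (omega_le (DS_intro Hfeas Hj)) _.
rewrite /dsum (vsum_ext (g := fun k' => if k' == k then lam k * Phi eps C (b k) (vadd (f k) z)
                                              else lam k' * Phi eps C (b k') (f k'))); last first.
  by move=> k'; rewrite /f'; case: eqP => [->|_] //.
rewrite vsum_upd; lra.
Qed.

Lemma perturb_g f g j w j' : feas (@vzero n) f g -> conj_star J g = Fin j ->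
  conj_star J (vadd g w) = Fin j' -> omega (Astar w) <= dsum f + j - j + j'.
Proof.
move=> Hf Hj Hj'.
have Hfeas : feas (Astar w) f (vadd g w).
  move=> i; rewrite (adj_add Hadj); have := Hf i; rewrite /vzero; lra.
apply: Rle_trans (omega_le (DS_intro Hfeas Hj')) _; lra.
Qed.

Section A0.
Variable a0 : vec n.
Hypothesis Hsub : forall x, omega (@vzero n) + dot a0 (vsub x (@vzero n)) <= omega x.

Lemma sub0 x : omega (@vzero n) + dot a0 x <= omega x.
Proof.
have := Hsub x; have -> : dot a0 (vsub x (@vzero n)) = dot a0 x; last done.
by apply: dot_ext => // i; rewrite /vsub /vzero; ring.
Qed.

Lemma phi_subgrad f g j k d : feas (@vzero n) f g -> conj_star J g = Fin j ->
  dsum f + j < omega (@vzero n) + d ->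
  forall z, Phi eps C (b k) (f k) + dot a0 z - d / lam k <= Phi eps C (b k) (vadd (f k) z).
Proof.
move=> Hf Hj Hd z.
have H1 := perturb_f k z Hf Hj.
have H2 := sub0 (vscal (lam k) z).
rewrite dot_scalr in H2.
have Hl := Hlampos k.
apply: (Rmult_le_reg_l (lam k)) => //.
have -> : lam k * (Phi eps C (b k) (f k) + dot a0 z - d / lam k)
        = lam k * Phi eps C (b k) (f k) + lam k * dot a0 z - d by field; lra.
lra.
Qed.

Lemma a0_simplex : simplex a0.
Proof.
case: k0_ex => k0 Hk0.
have key : forall z d, 0 < d -> exists f g j, feas (@vzero n) f g /\ conj_star J g = Fin j /\
    Phi eps C (b k0) (f k0) + dot a0 z - d / lam k0 <= Phi eps C (b k0) (vadd (f k0) z).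
  move=> z d Hd; case: (omega_approx (@vzero n) Hd) => v [/DS_elim [f [g [j [Hf [Hj ->]]]]] Hv].
  exists f, g, j; split => //; split => //; exact: (phi_subgrad k0 Hf Hj Hv).
have one : forall c : R, forall d, 0 < d -> c * vsum a0 - d / lam k0 <= c.
  move=> c d Hd; case: (key (fun _ => c) d Hd) => f [g [j [_ [_ H]]]].
  change (vadd (f k0) (fun _ => c)) with (fun i => f k0 i + c) in H.
  rewrite (Phi_shift C Heps (Hb k0)) in H.
  have E : dot a0 (fun _ => c) = c * vsum a0.
    by rewrite /dot -vsum_scal; apply: vsum_ext => i; ring.
  rewrite E in H.
  lra.
have lim : forall c, c * vsum a0 <= c.
  move=> c; apply: Rnot_lt_le => Hlt.
  set d := (c * vsum a0 - c) * lam k0 / 2.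
  have Hd : 0 < d by rewrite /d; apply: Rdiv_lt_0_compat; [apply: Rmult_lt_0_compat|]; lra.
  have := one c d Hd; have -> : d / lam k0 = (c * vsum a0 - c) / 2 by rewrite /d; field; lra.
  lra.
split.
- move=> i; apply: Rnot_lt_le => Hlt.
  set d := - a0 i * lam k0 / 2.
  have Hd : 0 < d by rewrite /d; apply: Rdiv_lt_0_compat; [apply: Rmult_lt_0_compat|]; lra.
  case: (key (vscal (-1) (ev i)) d Hd) => f [g [j [_ [_ H]]]].
  have Hm : Phi eps C (b k0) (vadd (f k0) (vscal (-1) (ev i))) <= Phi eps C (b k0) (f k0).
    apply: Phi_mono => // l; rewrite /vadd /vscal /ev; case: eqP => _; lra.
  rewrite dot_scalr dot_ev in H.
  have : d / lam k0 = - a0 i / 2 by rewrite /d; field; lra.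
  lra.
- have := lim 1; have := lim (-1); lra.
Qed.


Lemma J_bound f g j d : feas (@vzero n) f g -> conj_star J g = Fin j ->
  dsum f + j < omega (@vzero n) + d -> J (A a0) <= dot g (A a0) - j + d.
Proof.
move=> Hf Hj Hd.
case: (subgradient_exists HJ (A a0)) => g' Hg'.
have Hj' : conj_star J g' = Fin (dot g' (A a0) - J (A a0)).
  apply: conj_attained => y; have := Hg' y; rewrite dot_subr; lra.
have E : vadd g (vsub g' g) = g' by apply: functional_extensionality => i; rewrite /vadd /vsub; ring.
rewrite -E in Hj'.
have H1 := perturb_g Hf Hj Hj'.
have H2 := sub0 (Astar (vsub g' g)).
rewrite -Hadj dot_subr in H2.
rewrite E in H1.
rewrite !(dot_sym (A a0)) in H2.
lra.
Qed.

Lemma F_bound f g j d k : feas (@vzero n) f g -> conj_star J g = Fin j ->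
  dsum f + j < omega (@vzero n) + d ->
  F eps C (b k) a0 <= dot (f k) a0 - Phi eps C (b k) (f k) + d / lam k.
Proof.
move=> Hf Hj Hd; apply: Rnot_lt_le => Hlt.
set e := (F eps C (b k) a0 - (dot (f k) a0 - Phi eps C (b k) (f k) + d / lam k)) / 2.
case: (biconj C Heps (Hb k) (a0_simplex) (e := e) ltac:(rewrite /e; lra)) => fs Hfs.
have H := phi_subgrad k Hf Hj Hd (vsub fs (f k)).
have E : vadd (f k) (vsub fs (f k)) = fs by apply: functional_extensionality => i; rewrite /vadd /vsub; ring.
rewrite E dot_subr !(dot_sym a0) in H.
rewrite /e in Hfs; lra.
Qed.

Lemma P_a0_le : Pobj a0 <= - omega (@vzero n).
Proof.
have key : forall d, 0 < d -> Pobj a0 <= - omega (@vzero n) + (INR N + 1) * d.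
  move=> d Hd; case: (omega_approx (@vzero n) Hd) => v [Hv Hv'].
  have Hvge := omega_le Hv.
  case: (DS_elim Hv) => f [g [j [Hf [Hj Ev]]]]; rewrite Ev in Hv' Hvge.
  have HJb := J_bound Hf Hj Hv'.
  have HF : vsum (fun k => lam k * F eps C (b k) a0)
          <= vsum (fun k => lam k * dot (f k) a0 - lam k * Phi eps C (b k) (f k) + d).
    apply: vsum_le => k; have := F_bound k Hf Hj Hv'; have := Hlampos k => Hl H.
    have := Rmult_le_compat_l (lam k) _ _ (Rlt_le _ _ Hl) H.
    have -> : lam k * (dot (f k) a0 - Phi eps C (b k) (f k) + d / lam k)
            = lam k * dot (f k) a0 - lam k * Phi eps C (b k) (f k) + d by field; lra.
    done.
  rewrite vsum_add vsum_sub vsum_const (feas_dot a0 Hf) dot_zerol -/(dsum f) in HF.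
  rewrite /Pobj /primal_obj -/(F eps C _ a0).
  have -> : vsum (fun k => lam k * Fb eps C (b k) a0) = vsum (fun k => lam k * F eps C (b k) a0) by [].
  lra.
apply: Rnot_lt_le => Hlt.
set gap := Pobj a0 - - omega (@vzero n).
have Hpos : 0 < INR N + 1 by have := pos_INR N; lra.
have := key (gap / (2 * (INR N + 1))) ltac:(apply: Rdiv_lt_0_compat; rewrite /gap; lra).
have -> : (INR N + 1) * (gap / (2 * (INR N + 1))) = gap / 2 by field; lra.
rewrite /gap; lra.
Qed.

Lemma lower_all a : simplex a -> - omega (@vzero n) <= Pobj a.
Proof.
move=> Ha; have : - Pobj a <= omega (@vzero n).
  apply: omega_glb => v Hv; have := weak Ha Hv; rewrite dot_zerol; lra.
lra.
Qed.

Lemma part2 f g : dual_minimizer eps C b lam Astar J f g ->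
  forall k, is_gradient (Fb_star eps C (b k)) (f k) a0.
Proof.
move=> [Hf Hmin].
have Hf' : feas (@vzero n) f g by [].
have [j Hj] : exists j, conj_star J g = Fin j.
  case E: (conj_star J g) => [j| |]; first by exists j.
  - case: (DS_ne (@vzero n)) => v [f' [g' [Hf'' Hd']]].
    have := Hmin f' g' Hf''; rewrite Hd' /dual_obj E //.
  - by have := @conj_nonMInf p J g.
set V := dsum f + j.
have HV : DS (@vzero n) V by exact: DS_intro Hf' Hj.
have HVle : V <= omega (@vzero n).
  apply: omega_glb => v [f' [g' [Hf'' Hd']]].
  have := Hmin f' g' Hf''; rewrite Hd' /dual_obj Hj //.
have HP := P_a0_le.
set y0 := A a0.
have TJ : 0 <= j + J y0 - dot g y0 by have := conj_ub Hj y0; lra.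
have Tk : forall k, 0 <= lam k * (Phi eps C (b k) (f k) + F eps C (b k) a0 - dot (f k) a0).
  move=> k; apply: Rmult_le_pos; first exact: Rlt_le.
  have := Phi_ge C Heps (Hb k) (f k) a0_simplex; lra.
have Hsum : vsum (fun k => lam k * (Phi eps C (b k) (f k) + F eps C (b k) a0 - dot (f k) a0)) + (j + J y0 - dot g y0) <= 0.
  rewrite (vsum_ext (g := fun k => lam k * Phi eps C (b k) (f k) + lam k * F eps C (b k) a0 - lam k * dot (f k) a0)); last by move=> k; ring.
  rewrite vsum_sub vsum_add (feas_dot a0 Hf') dot_zerol -/(dsum f).
  move: HP; rewrite /Pobj /primal_obj -/y0.
  have -> : vsum (fun k => lam k * Fb eps C (b k) a0) = vsum (fun k => lam k * F eps C (b k) a0) by [].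
  rewrite /V in HVle; lra.
move=> k.
have Heq : Phi eps C (b k) (f k) <= dot (f k) a0 - F eps C (b k) a0.
  have := vsum_le_term k Tk; have := Tk k; have := Hlampos k => Hl H1 H2.
  have : lam k * (Phi eps C (b k) (f k) + F eps C (b k) a0 - dot (f k) a0) <= 0 by lra.
  move=> H3; apply: Rnot_lt_le => Hlt.
  have : 0 < lam k * (Phi eps C (b k) (f k) + F eps C (b k) a0 - dot (f k) a0).
    by apply: Rmult_lt_0_compat; lra.
  lra.
have Hlow : forall h, Phi eps C (b k) (f k) + dot h a0 <= Phi eps C (b k) (vadd (f k) h).
  move=> h; have := Phi_ge C Heps (Hb k) (vadd (f k) h) a0_simplex; rewrite dot_addl; lra.
have Hr := rr_simplex eps C (Hb k) (f k).
set r := rr eps C (b k) (f k).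
have Hra : forall i, r i = a0 i.
  set dd := vsub a0 r.
  set h := vscal (eps / 4) dd.
  have Hh : forall i, Rabs (h i) <= eps / 2.
    move=> i; rewrite /h /vscal /dd /vsub Rabs_mult (Rabs_right (eps / 4)); last lra.
    have [A0 A1] := simplex_le1 i a0_simplex; have [B0 B1] := simplex_le1 i Hr.
    change (rr eps C (b k) (f k) i) with (r i) in B0; change (rr eps C (b k) (f k) i) with (r i) in B1.
    have : Rabs (a0 i - r i) <= 1 by apply: Rabs_le; lra.
    have := Rabs_pos (a0 i - r i); nra.
  have Hup := Phi_upper C Heps (Hb k) (f k) Hh.
  have H1 := Hlow h.
  have E1 : dot h a0 - dot h r = eps / 4 * dot dd dd.
    rewrite -dot_subr /h dot_scall.
    by congr (_ * _); apply: dot_ext.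
  have E2 : dot h h = (eps / 4) * (eps / 4) * dot dd dd by rewrite /h dot_scall dot_scalr; ring.
  rewrite (dot_sym h r) in Hup.
  have : eps / 4 * dot dd dd <= 2 / eps * ((eps / 4) * (eps / 4) * dot dd dd).
    rewrite (dot_sym h r) in E1 *; rewrite -E2; lra.
  have -> : 2 / eps * ((eps / 4) * (eps / 4) * dot dd dd) = eps / 8 * dot dd dd by field; lra.
  move=> H2; have Hdd0 : dot dd dd <= 0 by nra.
  have Hdd : dot dd dd = 0 by have := dot_ge0 dd; lra.
  move=> i; have := vsum_eq0_nonneg (fun i => Rle_0_sqr (dd i)) Hdd i.
  rewrite /dd /vsub /Rsqr => Hi; nra.
have -> : a0 = r by apply: functional_extensionality => i; rewrite Hra.
exact: Phi_gradient.
Qed.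

End A0.
End Main.


Unset Implicit Arguments.
Set Strict Implicit.
Set Printing Implicit Defensive.

Theorem mainTheorem7 (n N p : nat) (eps : R) (C : 'I_n -> 'I_n -> R)
  (b : 'I_N -> vec n) (lam : vec N)
  (A : vec n -> vec p) (Astar : vec p -> vec n) (J : vec p -> R) :
  0 < eps ->
  (forall k, simplex (b k)) ->
  simplex lam -> (forall k, 0 < lam k) ->
  linear_map A -> is_adjoint A Astar ->
  convex_fun J ->
  (exists a0, simplex a0 /\
     (forall a, simplex a -> primal_obj eps C b lam A J a0 <= primal_obj eps C b lam A J a) /\
     dual_inf eps C b lam Astar J = Fin (- primal_obj eps C b lam A J a0))
  /\
  (forall (f : 'I_N -> vec n) (g : vec p),
     dual_minimizer eps C b lam Astar J f g ->
     exists a : vec n,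
       (forall k, is_gradient (Fb_star eps C (b k)) (f k) a) /\
       simplex a /\
       (forall a', simplex a' -> primal_obj eps C b lam A J a <= primal_obj eps C b lam A J a')).
Proof.
move=> Heps Hb Hlam Hlampos _ Hadj HJ.
have Hcv := omega_convex C Heps Hb Hlam Hlampos Hadj HJ.
case: (subgradient_exists Hcv (@vzero n)) => a0 Hsub.
have Hs := a0_simplex Heps Hb Hlam Hlampos Hadj HJ Hsub.
have Hle := P_a0_le Heps Hb Hlam Hlampos Hadj HJ Hsub.
have Hlow := lower_all C Heps Hb Hlam Hlampos Hadj HJ.
have Hopt : forall a, simplex a -> primal_obj eps C b lam A J a0 <= primal_obj eps C b lam A J a.
  move=> a Ha; have := Hlow a Ha; rewrite /Pobj in Hle *; lra.
split.
- exists a0; split => //; split => //.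
  have -> : dual_inf eps C b lam Astar J = ER_inf (DS eps C b lam Astar J (@vzero n)) by [].
  rewrite (omega_fin C Heps Hb Hlam Hlampos Hadj HJ); f_equal.
  have := Hlow a0 Hs; rewrite /Pobj in Hle *; lra.
- move=> f g Hmin; exists a0; split; last by split.
  exact: (part2 Heps Hb Hlam Hlampos Hadj HJ Hsub Hmin).
Qed.
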